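(* Let $\mathbb{X},\mathbb{Y}$ be finite-dimensional real Hilbert spaces, $f:\mathbb{X}\to(-\infty,\infty]$ and $g:\mathbb{Y}\to(-\infty,\infty]$ proper, convex and lower semicontinuous, $K:\mathbb{X}\to\mathbb{Y}$ linear, and $h:\mathbb{X}\to\mathbb{R}$ convex and differentiable with $\bar L$-Lipschitz gradient. Assume (A1) below holds. Let $\{(z_n,x_n,w_n,y_n,\tau_n)\}$ be generated by the P-GRPDA algorithm described in the context. Then $\{(x_n,y_n)\}$ converges to a saddle point of $\mathbb{L}(x,y):=f(x)+h(x)+\langle Kx,y\rangle-g^*(y)$, i.e., to some $(\hat x,\hat y)$ with $\mathbb{L}(\hat x,y)\le\mathbb{L}(\hat x,\hat y)\le\mathbb{L}(x,\hat y)$ for all $(x,y)\in\mathbb{X}\times\mathbb{Y}$.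
   Context: $\phi=\frac{1+\sqrt5}{2}$; $K^*$ adjoint of $K$; $g^*$ Fenchel conjugate of $g$; $\operatorname{prox}_{\lambda f}(x)=\arg\min_{u}\{f(u)+\frac{1}{2\lambda}\|u-x\|^2\}$. (A1): the saddle point problem $\min_{x}\max_{y}\mathbb{L}(x,y)$ has a nonempty solution set, and $0\in\operatorname{ri}(K(\operatorname{dom}f)-\operatorname{dom}g)$ (ri = relative interior). (The paper also assumes the proximal maps of $f,g$ are efficiently computable.) P-GRPDA: choose $x_0\in\mathbb{X}$, $y_0\in\mathbb{Y}$, set $z_0=x_0$, choose $\beta>0$, $\psi\in(1,\phi]$, $0<2\mu'<\mu<\psi/2$, $\tau_0>0$. For $n=1,2,\dots$: $z_n=\frac{\psi-1}{\psi}x_{n-1}+\frac1\psi z_{n-1}$; $x_n=\operatorname{prox}_{\tau_{n-1}f}\big(z_n-\tau_{n-1}K^*y_{n-1}-\tau_{n-1}\nabla h(x_{n-1})\big)$; $\tau_n=\min\left\{\tau_{n-1},\ \frac{\mu\|x_n-x_{n-1}\|}{\sqrt\beta\|Kx_n-Kx_{n-1}\|},\ \frac{\mu'\|x_n-x_{n-1}\|}{\|\nabla h(x_n)-\nabla h(x_{n-1})\|}\right\}$, $\sigma_n=\beta\tau_n$; $w_n=\operatorname{prox}_{\frac{1}{\sigma_n}g}\big(\frac{y_{n-1}}{\sigma_n}+Kx_n\big)$; $y_n=y_{n-1}+\sigma_n(Kx_n-w_n)$. Conventions in the $\tau_n$ update: $1/0=\infty$ (a term with zero denominator and nonzero numerator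 is ignored) and $0/0=\infty$ (so $\tau_n=\tau_{n-1}$ if $x_n=x_{n-1}$). *)

(* Defs.v *)
(* R : realType, X = 'rV[R]_n, Y = 'rV[R]_m with the
   Euclidean inner product. *)
From HB Require Import structures.
From mathcomp Require Import all_boot all_order all_algebra.
From mathcomp Require Import all_classical all_reals all_analysis.
Set Implicit Arguments. Unset Strict Implicit. Unset Printing Implicit Defensive.
Import Order.TTheory GRing.Theory Num.Theory.
Import numFieldNormedType.Exports.
Local Open Scope classical_set_scope.
Local Open Scope ring_scope.

Section Defs.
Variable R : realType.

Definition dotv {k : nat} (u v : 'rV[R]_k) : R := (u *m v^T) 0 0.
Definition enorm {k : nat} (u : 'rV[R]_k) : R := Num.sqrt (dotv u u).

Definition edom {k : nat} (F : 'rV[R]_k -> \bar R) : set 'rV[R]_k :=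
  [set x | (F x < +oo)%E].

Definition proper_fun {k : nat} (F : 'rV[R]_k -> \bar R) : Prop :=
  (exists x, (F x < +oo)%E) /\ (forall x, (-oo < F x)%E).

(* convexity of an extended-real valued function (proper case: no -oo) *)
Definition convex_efun {k : nat} (F : 'rV[R]_k -> \bar R) : Prop :=
  forall (x y : 'rV[R]_k) (t : R), 0 < t < 1 ->
    (F (t *: x + (1 - t) *: y)%R <= t%:E * F x + (1 - t)%:E * F y)%E.

Definition convex_rfun {k : nat} (F : 'rV[R]_k -> R) : Prop :=
  forall (x y : 'rV[R]_k) (t : R), 0 <= t <= 1 ->
    F (t *: x + (1 - t) *: y) <= t * F x + (1 - t) * F y.

Definition is_gradient {k : nat} (F : 'rV[R]_k -> R) (G : 'rV[R]_k -> 'rV[R]_k)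
  : Prop :=
  forall x eps, 0 < eps -> exists2 del, 0 < del &
    forall v, enorm v < del ->
      `|F (x + v) - F x - dotv (G x) v| <= eps * enorm v.

Definition lipschitz_with {k : nat} (L : R) (G : 'rV[R]_k -> 'rV[R]_k) : Prop :=
  forall x y, enorm (G x - G y) <= L * enorm (x - y).

Definition fconj {k : nat} (F : 'rV[R]_k -> \bar R) (y : 'rV[R]_k) : \bar R :=
  ereal_sup (range (fun w => ((dotv w y)%:E - F w)%E)).

Definition is_prox {k : nat} (lam : R) (F : 'rV[R]_k -> \bar R)
  (v p : 'rV[R]_k) : Prop :=
  forall u, (F p + ((2 * lam)^-1 * enorm (p - v) ^+ 2)%R%:E
             <= F u + ((2 * lam)^-1 * enorm (u - v) ^+ 2)%R%:E)%E.

(* the Lagrangian  L(x,y) = f x + h x + <Kx, y> - g^*(y), with K x := x *m K *)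
Definition lagr {n m : nat} (f : 'rV[R]_n -> \bar R) (h : 'rV[R]_n -> R)
  (K : 'M[R]_(n, m)) (g : 'rV[R]_m -> \bar R) (x : 'rV[R]_n) (y : 'rV[R]_m)
  : \bar R :=
  (f x + (h x + dotv (x *m K) y)%R%:E - fconj g y)%E.

Definition saddle_point {n m : nat} (f : 'rV[R]_n -> \bar R) (h : 'rV[R]_n -> R)
  (K : 'M[R]_(n, m)) (g : 'rV[R]_m -> \bar R) (xh : 'rV[R]_n) (yh : 'rV[R]_m)
  : Prop :=
  f xh \is a fin_num /\ fconj g yh \is a fin_num /\
  (forall x y, (lagr f h K g xh y <= lagr f h K g xh yh)%E /\
               (lagr f h K g xh yh <= lagr f h K g x yh)%E).

Definition affine_hull {k : nat} (C : set 'rV[R]_k) : set 'rV[R]_k :=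
  [set x | exists (p : nat) (pts : 'I_p -> 'rV[R]_k) (a : 'I_p -> R),
     (forall i, C (pts i)) /\ \sum_(i < p) a i = 1 /\
     x = \sum_(i < p) a i *: pts i].

Definition rel_interior {k : nat} (C : set 'rV[R]_k) : set 'rV[R]_k :=
  [set x | C x /\ exists2 eps, 0 < eps &
     forall z, affine_hull C z -> enorm (z - x) < eps -> C z].

Definition Kdomf_minus_domg {n m : nat} (f : 'rV[R]_n -> \bar R)
  (K : 'M[R]_(n, m)) (g : 'rV[R]_m -> \bar R) : set 'rV[R]_m :=
  [set u | exists x w, edom f x /\ edom g w /\ u = x *m K - w].

(* min(t, a/b) with the convention that the term a/b is ignored when b = 0
   (1/0 = oo and 0/0 = oo) *)
Definition min_ratio (t a b : R) : R := if b == 0 then t else Num.min t (a / b).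

End Defs.

Definition golden {R : realType} : R := (1 + Num.sqrt 5) / 2.

(* Main.v *)
Require Import Defs.
From HB Require Import structures.
From mathcomp Require Import all_boot all_order all_algebra.
From mathcomp Require Import all_classical all_reals all_analysis.
From mathcomp Require Import ring lra.
Set Implicit Arguments. Unset Strict Implicit. Unset Printing Implicit Defensive.
Import Order.TTheory GRing.Theory Num.Theory.
Import numFieldNormedType.Exports.
Local Open Scope classical_set_scope.
Local Open Scope ring_scope.

Section VecAlg.
Variable R : realType.
Variable k : nat.
Implicit Types u v a b c : 'rV[R]_k.

Lemma dotvE u v : dotv u v = \sum_j u 0 j * v 0 j.
Proof. by rewrite /dotv !mxE; apply: eq_bigr => j _; rewrite mxE. Qed.

Lemma dotvC u v : dotv u v = dotv v u.
Proof. by rewrite !dotvE; apply: eq_bigr => j _; rewrite mulrC. Qed.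

Lemma dotvDl a b c : dotv (a + b) c = dotv a c + dotv b c.
Proof. by rewrite !dotvE -big_split; apply: eq_bigr => j _; rewrite !mxE mulrDl. Qed.

Lemma dotvDr a b c : dotv c (a + b) = dotv c a + dotv c b.
Proof. by rewrite dotvC dotvDl !(dotvC c). Qed.

Lemma dotvZl (t : R) a c : dotv (t *: a) c = t * dotv a c.
Proof. by rewrite !dotvE mulr_sumr; apply: eq_bigr => j _; rewrite !mxE mulrA. Qed.

Lemma dotvZr (t : R) a c : dotv c (t *: a) = t * dotv c a.
Proof. by rewrite dotvC dotvZl dotvC. Qed.

Lemma dotvNl a c : dotv (- a) c = - dotv a c.
Proof. by rewrite -scaleN1r dotvZl mulN1r. Qed.

Lemma dotvNr a c : dotv c (- a) = - dotv c a.
Proof. by rewrite dotvC dotvNl dotvC. Qed.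

Lemma dotvBl a b c : dotv (a - b) c = dotv a c - dotv b c.
Proof. by rewrite dotvDl dotvNl. Qed.

Lemma dotvBr a b c : dotv c (a - b) = dotv c a - dotv c b.
Proof. by rewrite dotvDr dotvNr. Qed.

Lemma dotv0l c : dotv 0 c = 0.
Proof. by rewrite dotvE big1 // => j _; rewrite mxE mul0r. Qed.

Lemma dotv0r c : dotv c 0 = 0.
Proof. by rewrite dotvC dotv0l. Qed.

Lemma dotvv_ge0 u : 0 <= dotv u u.
Proof. by rewrite dotvE; apply: sumr_ge0 => j _; rewrite -expr2 sqr_ge0. Qed.

Lemma enorm_ge0 u : 0 <= enorm u.
Proof. exact: sqrtr_ge0. Qed.

Lemma enorm_sq u : enorm u ^+ 2 = dotv u u.
Proof. by rewrite /enorm sqr_sqrtr // dotvv_ge0. Qed.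

Lemma enormZ (t : R) u : enorm (t *: u) = `|t| * enorm u.
Proof.
rewrite /enorm dotvZl dotvZr mulrA -expr2 sqrtrM ?sqr_ge0 //.
by rewrite sqrtr_sqr.
Qed.

Lemma enormN u : enorm (- u) = enorm u.
Proof. by rewrite -scaleN1r enormZ normrN normr1 mul1r. Qed.

Lemma enormB u v : enorm (u - v) = enorm (v - u).
Proof. by rewrite -enormN opprB. Qed.

Lemma CS a b : `|dotv a b| <= enorm a * enorm b.
Proof.
have key : dotv a b ^+ 2 <= dotv a a * dotv b b.
  have H t : 0 <= dotv a a - 2 * t * dotv a b + t ^+ 2 * dotv b b.
    have := dotvv_ge0 (a - t *: b).
    rewrite !dotvBl !dotvBr !dotvZl !dotvZr (dotvC b a).
    by move=> h; nra.
  have Haa := dotvv_ge0 a; have Hbb := dotvv_ge0 b.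
  have [bb0|bbpos] := eqVneq (dotv b b) 0.
    have [ab0|abn0] := eqVneq (dotv a b) 0; first by rewrite ab0 bb0; nra.
    have := H ((dotv a a + 1) / (2 * dotv a b)); rewrite bb0 mulr0 addr0.
    have -> : 2 * ((dotv a a + 1) / (2 * dotv a b)) * dotv a b = dotv a a + 1.
      by field; rewrite abn0.
    lra.
  have bp : 0 < dotv b b by rewrite lt_def bbpos Hbb.
  set t := dotv a b / dotv b b.
  have tB : t * dotv b b = dotv a b by rewrite /t mulfVK.
  have := H t.
  have -> : t ^+ 2 * dotv b b = t * dotv a b by rewrite expr2 -mulrA tB.
  move=> h1.
  have h2 : 0 <= (dotv a a - t * dotv a b) * dotv b b by apply: mulr_ge0; lra.
  have h3 : t * dotv a b * dotv b b = dotv a b * dotv a b by rewrite mulrAC tB.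
  rewrite expr2; nra.
have ea := enorm_ge0 a; have eb := enorm_ge0 b.
rewrite -(ger0_norm (mulr_ge0 ea eb)).
rewrite -ler_sqr ?nnegrE ?normr_ge0 //.
by rewrite !real_normK ?num_real // exprMn !enorm_sq.
Qed.

Lemma dotv_le a b : dotv a b <= enorm a * enorm b.
Proof. exact: le_trans (ler_norm _) (CS a b). Qed.

Lemma enormD u v : enorm (u + v) <= enorm u + enorm v.
Proof.
have eu := enorm_ge0 u; have ev := enorm_ge0 v; have euv := enorm_ge0 (u + v).
have h : enorm (u + v) ^+ 2 <= (enorm u + enorm v) ^+ 2.
  rewrite enorm_sq dotvDl !dotvDr (dotvC v u) sqrrD !enorm_sq.
  have := dotv_le u v; lra.
by rewrite -ler_sqr ?nnegrE // addr_ge0.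
Qed.

Lemma enorm_le_sq u : enorm u <= 1 + dotv u u.
Proof. rewrite -enorm_sq; have := enorm_ge0 u; nra. Qed.

Lemma young (s p q : R) : 0 < s -> p * q <= (s * p ^+ 2 + q ^+ 2 / s) / 2.
Proof.
move=> s0.
have : 0 <= (s * p - q) ^+ 2 / s by apply: divr_ge0; [apply: sqr_ge0|lra].
have -> : (s * p - q) ^+ 2 / s = s * p ^+ 2 - 2 * (p * q) + q ^+ 2 / s.
  by field; rewrite gt_eqF.
lra.
Qed.


Lemma CS2 a b : dotv a b ^+ 2 <= dotv a a * dotv b b.
Proof.
have := CS a b; rewrite -!enorm_sq => h.
have ea := enorm_ge0 a; have eb := enorm_ge0 b.
rewrite -real_normK ?num_real // -exprMn.
by rewrite ler_sqr ?nnegrE ?normr_ge0 ?mulr_ge0.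
Qed.

Lemma entry_le_enorm u j : `|u 0 j| <= enorm u.
Proof.
rewrite -(ler_sqr (normr_ge0 _) (enorm_ge0 u)) real_normK ?num_real //.
rewrite enorm_sq dotvE (bigD1 j) //= -expr2 lerDl.
by apply: sumr_ge0 => i _; rewrite -expr2 sqr_ge0.
Qed.

Lemma mxnorm_le_enorm u : `|u| <= enorm u.
Proof.
rewrite [leLHS]/Num.norm /= mx_normrE; apply/bigmax_leP; split; first exact: enorm_ge0.
by move=> [i j] _ /=; rewrite (ord1 i); apply: entry_le_enorm.
Qed.

Lemma entry_le_mxnorm u j : `|u 0 j| <= `|u|.
Proof.
rewrite [leRHS]/Num.norm /= mx_normrE.
exact: (@le_bigmax _ _ _ 0 (fun ij : 'I_1 * 'I_k => `|u ij.1 ij.2|) (0, j)).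
Qed.

Lemma enorm_le_mxnorm u : enorm u ^+ 2 <= k%:R * `|u| ^+ 2.
Proof.
rewrite enorm_sq dotvE mulr_natl.
have -> : (`|u| ^+ 2 *+ k) = \sum_(j < k) `|u| ^+ 2 by rewrite sumr_const card_ord.
apply: ler_sum => j _; rewrite -expr2 -real_normK ?num_real //.
by rewrite ler_sqr ?nnegrE ?normr_ge0 // entry_le_mxnorm.
Qed.

Lemma enorm_small (e : R) : 0 < e -> exists2 d, 0 < d & forall u, `|u| < d -> enorm u < e.
Proof.
move=> e0; exists (e / (k%:R + 1)); first by rewrite divr_gt0 // ltr_wpDl.
move=> u hu.
have k0 : (0 <= k%:R :> R) by [].
have d0 : 0 < e / (k%:R + 1) by rewrite divr_gt0 // ltr_wpDl.
have h1 := enorm_le_mxnorm u.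
have hn := normr_ge0 u.
have h2 : `|u| * (k%:R + 1) < e by rewrite -ltr_pdivlMr // ltr_wpDl.
rewrite -(ltr_sqr (enorm_ge0 u) (ltW e0)).
have h3 : (`|u| * (k%:R + 1)) ^+ 2 < e ^+ 2.
  by rewrite ltr_sqr ?nnegrE ?mulr_ge0 ?addr_ge0 // ltW.
apply: le_lt_trans h1 _; nra.
Qed.

End VecAlg.

Section MatAlg.
Variable R : realType.
Variables (n m : nat).
Variable K : 'M[R]_(n, m).

Lemma dotv_mulK (a : 'rV[R]_n) (b : 'rV[R]_m) : dotv (a *m K) b = dotv a (b *m K^T).
Proof. by rewrite /dotv trmx_mul trmxK mulmxA. Qed.

Lemma Kbound : exists2 c, 0 < c & forall v : 'rV[R]_n, enorm (v *m K) <= c * enorm v.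
Proof.
pose col j := (col j K)^T.
pose S := \sum_j dotv (col j) (col j).
have S0 : 0 <= S by apply: sumr_ge0 => j _; apply: dotvv_ge0.
exists (Num.sqrt S + 1); first by rewrite ltr_wpDl ?sqrtr_ge0.
move=> v.
have ev := enorm_ge0 v.
have h : enorm (v *m K) ^+ 2 <= S * enorm v ^+ 2.
  rewrite enorm_sq dotvE /S mulr_suml; apply: ler_sum => j _.
  have -> : (v *m K) 0 j = dotv v (col j).
    by rewrite dotvE mxE; apply: eq_bigr => i _; rewrite /col !mxE.
  by rewrite -expr2 enorm_sq mulrC; apply: CS2.
have hs : Num.sqrt S ^+ 2 = S by rewrite sqr_sqrtr.
have := sqrtr_ge0 S; have := enorm_ge0 (v *m K).
rewrite -hs in h => h1 h2.
rewrite -(ler_sqr h1); last by rewrite nnegrE mulr_ge0 // addr_ge0.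
nra.
Qed.
End MatAlg.


Section Prox.
Variable R : realType.
Variable k : nat.
Implicit Types u v p a b : 'rV[R]_k.

Lemma finE (x : \bar R) : (-oo < x)%E -> (x < +oo)%E -> exists r, x = r%:E.
Proof. by case: x => // r _ _; exists r. Qed.

Lemma small_le0 (Q M : R) : 0 <= M -> (forall t, 0 < t < 1 -> Q <= t * M) -> Q <= 0.
Proof.
move=> M0 H; rewrite leNgt; apply/negP => Q0.
have d0 : 0 < Q + M + 1 by lra.
have := H (Q / (Q + M + 1)).
have t0 : 0 < Q / (Q + M + 1) by rewrite divr_gt0.
have t1 : Q / (Q + M + 1) < 1 by rewrite ltr_pdivrMr // mul1r; lra.
rewrite t0 t1 => /(_ isT).
have -> : Q / (Q + M + 1) * M = Q - Q * (Q + 1) / (Q + M + 1).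
  by field; rewrite gt_eqF.
have : 0 < Q * (Q + 1) / (Q + M + 1) by rewrite divr_gt0 // mulr_gt0 // ltr_wpDl ?ltW.
lra.
Qed.

Lemma sqD_expand a b (t : R) :
  dotv (a + t *: b) (a + t *: b) = dotv a a + 2 * t * dotv a b + t ^+ 2 * dotv b b.
Proof.
rewrite !dotvDl !dotvDr !dotvZl !dotvZr (dotvC b a); ring.
Qed.

Lemma prox_vi (lam : R) (F : 'rV[R]_k -> \bar R) v p :
  0 < lam -> proper_fun F -> convex_efun F -> is_prox lam F v p ->
  exists Fp, F p = Fp%:E /\
    forall u Fu, F u = Fu%:E -> Fp + lam^-1 * dotv (v - p) (u - p) <= Fu.
Proof.
move=> lam0 [[u0 Fu0] Fninf] Fcvx Hp.
have Fpfin : (F p < +oo)%E.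
  have := Hp u0; case: (F p) (Fninf p) => // _.
  by case: (F u0) Fu0.
have [Fp eFp] := finE (Fninf p) Fpfin.
exists Fp; split => // u Fu eFu.
pose c := (2 * lam)^-1.
have c0 : 0 < c by rewrite invr_gt0 mulr_gt0.
set d := dotv (p - v) (u - p).
set N := dotv (u - p) (u - p).
have N0 : 0 <= N by apply: dotvv_ge0.
suff : Fp - Fu - lam^-1 * d <= 0.
  have -> : dotv (v - p) (u - p) = - d by rewrite /d -dotvNl opprB.
  lra.
apply: (@small_le0 _ (c * N)); first by rewrite mulr_ge0 // ltW.
move=> t /andP[t0 t1].
pose ut := t *: u + (1 - t) *: p.
have eut : ut - v = (p - v) + t *: (u - p).
  by apply/rowP => j; rewrite !mxE; ring.
have cv := Fcvx u p t; rewrite t0 t1 /= in cv; move: (cv isT) => {}cv.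
rewrite eFu eFp -!EFinM -EFinD in cv.
have [Ft eFt] : exists Ft, F ut = Ft%:E.
  by apply: finE; [exact: Fninf| exact: le_lt_trans cv (ltry _)].
rewrite -/ut eFt lee_fin in cv.
have hp := Hp ut; rewrite eFp eFt -!EFinD lee_fin in hp.
rewrite !enorm_sq eut sqD_expand -/c -/d -/N !mulrDr in hp.
have e1 : (1 - t) * Fp = Fp - t * Fp by ring.
have hc : c * (2 * t * d) = t * (lam^-1 * d) by rewrite /c; field; rewrite gt_eqF.
have h2 : Fp <= t * Fu + (Fp - t * Fp) + c * (2 * t * d + t ^+ 2 * N).
  rewrite mulrDr; lra.
rewrite mulrDr hc in h2.
have e2 : c * (t ^+ 2 * N) = t * (t * (c * N)) by ring.
rewrite -(ler_pM2l t0).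
have -> : t * (Fp - Fu - lam^-1 * d) = t * Fp - t * Fu - t * (lam^-1 * d) by ring.
lra.
Qed.

Lemma fconj_lb (g : 'rV[R]_k -> \bar R) w gw y :
  g w = gw%:E -> ((dotv w y - gw)%:E <= fconj g y)%E.
Proof.
move=> e; apply: ereal_sup_ubound; exists w => //; by rewrite e.
Qed.

Lemma fconj_ninfty (g : 'rV[R]_k -> \bar R) y : proper_fun g -> (-oo < fconj g y)%E.
Proof.
move=> [[w gw] gn].
have [r er] := finE (gn w) gw.
exact: lt_le_trans (ltNyr _) (fconj_lb y er).
Qed.

Lemma fconj_ub (g : 'rV[R]_k -> \bar R) w gw y :
  g w = gw%:E -> (forall u gu, g u = gu%:E -> gw + dotv y (u - w) <= gu) ->
  (forall u, (-oo < g u)%E) ->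
  (fconj g y <= (dotv w y - gw)%:E)%E.
Proof.
move=> e H gn; apply/ereal_supP => _ [u _ <-].
case E: (g u) (gn u) => [gu| |] //= _.
  have := H u gu E; rewrite dotvBr (dotvC y u) (dotvC y w) lee_fin; lra.
by rewrite addeC /= leNye.
Qed.


Lemma grad_ineq (h : 'rV[R]_k -> R) gradh :
  convex_rfun h -> is_gradient h gradh -> forall a b, h a + dotv (gradh a) (b - a) <= h b.
Proof.
move=> hc hg a b.
set d := b - a.
suff : h a + dotv (gradh a) d - h b <= 0 by lra.
apply: (@small_le0 _ (enorm d)); first exact: enorm_ge0.
move=> e /andP[e0 e1].
have [del del0 Hd] := hg a e e0.
have ed := enorm_ge0 d.
pose t := del / (del + enorm d + 1).
have t0 : 0 < t by rewrite divr_gt0 //; lra.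
have t1 : t < 1 by rewrite ltr_pdivrMr ?mul1r; lra.
have tle : t * enorm d < del.
  rewrite /t mulrAC ltr_pdivrMr; last lra.
  nra.
have := Hd (t *: d); rewrite enormZ gtr0_norm // => /(_ tle).
rewrite dotvZr => H1.
have := hc b a t; rewrite (ltW t0) (ltW t1) => /(_ isT).
have -> : t *: b + (1 - t) *: a = a + t *: d by apply/rowP => j; rewrite !mxE; ring.
move=> H2.
have H3 := ler_normlW H1; rewrite ler_norml in H1; case/andP: H1 => H1 _.
have : t * (h a + dotv (gradh a) d - h b) <= t * (e * enorm d) by nra.
by rewrite ler_pM2l.
Qed.

End Prox.

Section MinRatio.
Variable R : realType.

Lemma min_ratio_le (t a b : R) : min_ratio t a b <= t.
Proof. by rewrite /min_ratio; case: eqP => _ //; rewrite ge_min lexx. Qed.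

Lemma min_ratio_mul (t a b : R) : 0 <= a -> 0 <= b -> min_ratio t a b * b <= a.
Proof.
move=> a0 b0; rewrite /min_ratio; case: eqP => [->|/eqP bn0]; first by rewrite mulr0.
have bp : 0 < b by rewrite lt_def bn0 b0.
by rewrite -ler_pdivlMr // ge_min lexx orbT.
Qed.

Lemma min_ratio_ge (t a b C : R) : 0 <= b -> 0 < C -> b <= C * a ->
  Num.min t C^-1 <= min_ratio t a b.
Proof.
move=> b0 C0 bCa; rewrite /min_ratio; case: eqP => [_|/eqP bn0]; first by rewrite ge_min lexx.
have bp : 0 < b by rewrite lt_def bn0 b0.
have ap : 0 < a by rewrite -(pmulr_rgt0 _ C0); exact: lt_le_trans bp bCa.
rewrite le_min ge_min lexx /= ge_min; apply/orP; right.
rewrite ler_pdivlMr //.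
have : C^-1 * b <= C^-1 * (C * a) by rewrite ler_wpM2l // invr_ge0 ltW.
by rewrite mulrA mulVf ?gt_eqF // mul1r.
Qed.

Lemma noninc_inf (u : nat -> R) (n0 : nat) (lb : R) :
  (forall k, (n0 <= k)%N -> u k.+1 <= u k) -> (forall k, lb <= u k) ->
  forall e, 0 < e -> exists N, (n0 <= N)%N /\ forall k, (N <= k)%N -> u N - u k < e.
Proof.
move=> dec lbH e e0.
pose E := [set u (j + n0)%N | j in [set: nat]].
have hE : has_inf E by split; [exists (u (0 + n0)%N); exists 0%N | exists lb => _ [j _ <-]].
have [_ [j _ <-] hj] := inf_adherent e0 hE.
exists (j + n0)%N; split; first exact: leq_addl.
move=> k hk.
have : inf E <= u k.
  apply: ge_inf; first by exists lb => _ [i _ <-].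
  by exists (k - n0)%N => //; rewrite subnK // (leq_trans (leq_addl _ _) hk).
lra.
Qed.

Lemma noninc_le (u : nat -> R) (n0 : nat) :
  (forall k, (n0 <= k)%N -> u k.+1 <= u k) -> forall N k, (n0 <= N)%N -> (N <= k)%N -> u k <= u N.
Proof.
move=> dec N k hN; elim: k => [|k IH]; first by rewrite leqn0 => /eqP->.
rewrite leq_eqVlt => /orP[/eqP->//|hk].
apply: le_trans (dec _ _) (IH hk); exact: leq_trans hN hk.
Qed.

End MinRatio.

Section EnergyReal.
Variable R : realType.

Lemma energy_real (t0 t1 t2 beta s psi mu mu' th0 rho0 q : R)
 (A B C KT HT nD nDy nKdx nG nD0 sqZ2 sqZ3 W V sqY0 sqY1 : R) :
 0 < t0 -> 0 < t1 -> 0 < t2 -> 0 < s -> s ^+ 2 = beta -> 1 < psi -> psi ^+ 2 <= psi + 1 ->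
 0 <= mu -> 0 <= mu' -> 0 < th0 -> th0 * t0 <= t1 -> t1 <= t0 -> t1 <= rho0 * t2 ->
 0 <= nD -> 0 <= nDy -> 0 <= nKdx -> 0 <= nG -> 0 <= nD0 -> 0 <= W -> 0 <= V ->
 KT + HT <= A / t1 + B / t0 + C / (beta * t1) ->
 2 * A = q * (sqZ2 - sqZ3) - (1 + psi^-1) * W ->
 2 * B = psi * (W - V - nD ^+ 2) ->
 2 * C = sqY0 - nDy ^+ 2 - sqY1 ->
 `|KT| <= nKdx * nDy -> t2 * s * nKdx <= mu * nD ->
 `|HT| <= nG * nD -> t1 * nG <= mu' * nD0 ->
 q / 2 * sqZ3 + sqY1 / beta / 2 + mu' / 2 * nD ^+ 2
 + th0 * psi / 2 * V + (th0 * psi - rho0 * mu - 2 * mu') / 2 * nD ^+ 2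
 + (1 - rho0 * mu) / beta / 2 * nDy ^+ 2
 <= q / 2 * sqZ2 + sqY0 / beta / 2 + mu' / 2 * nD0 ^+ 2.
Proof.
move=> t00 t10 t20 s0 sb psi1 psi2 mu0 mu'0 th00 tht0 t1t0 t1t2 nD0' nDy0 nKdx0 nG0 nD00 W0 V0.
move=> core eA eB eC hK stK hH stH.
have b0 : 0 < beta by rewrite -sb exprn_gt0.
set th := t1 / t0.
have th_le : th <= 1 by rewrite /th ler_pdivrMr // mul1r.
have th_ge : th0 <= th by rewrite /th ler_pdivlMr.
have h1 : t1 * (KT + HT) <= A + th * B + C / beta.
  have -> : A + th * B + C / beta = t1 * (A / t1 + B / t0 + C / (beta * t1)).
    by rewrite /th; field; rewrite !gt_eqF.
  by rewrite ler_pM2l.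
have hKT : - (t1 * KT) <= rho0 * mu / 2 * (nD ^+ 2 + nDy ^+ 2 / beta).
  have a1 : t1 * nKdx <= rho0 * t2 * nKdx by rewrite ler_wpM2r.
  have a2 : t2 * nKdx <= mu * nD / s by rewrite ler_pdivlMr // mulrAC.
  have rho00 : 0 <= rho0.
    by have := lt_le_trans t10 t1t2; rewrite pmulr_lgt0 // => /ltW.
  have a3 : t1 * nKdx <= rho0 * (mu * nD / s) by rewrite -mulrA in a1; apply: le_trans a1 _; rewrite ler_wpM2l.
  have a4 : nD * (nDy / s) <= (1 * nD ^+ 2 + (nDy / s) ^+ 2 / 1) / 2 by apply: young.
  have a5 : (nDy / s) ^+ 2 = nDy ^+ 2 / beta by rewrite expr_div_n sb.
  rewrite mul1r divr1 a5 in a4.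
  have a6 : - (t1 * KT) <= t1 * nKdx * nDy.
    have hk : - KT <= nKdx * nDy by move: hK; rewrite ler_norml => /andP[hk _]; lra.
    by have := ler_wpM2l (ltW t10) hk; rewrite mulrN mulrA.
  apply: (le_trans a6).
  have a7 : t1 * nKdx * nDy <= rho0 * (mu * nD / s) * nDy by rewrite ler_wpM2r.
  apply: (le_trans a7).
  have -> : rho0 * (mu * nD / s) * nDy = rho0 * mu * (nD * (nDy / s)) by ring.
  have : rho0 * mu * (nD * (nDy / s)) <= rho0 * mu * ((nD ^+ 2 + nDy ^+ 2 / beta) / 2).
    by rewrite ler_wpM2l // mulr_ge0.
  have -> : rho0 * mu / 2 * (nD ^+ 2 + nDy ^+ 2 / beta) = rho0 * mu * ((nD ^+ 2 + nDy ^+ 2 / beta) / 2) by ring.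
  by [].
have hHT : - (t1 * HT) <= mu' / 2 * (nD0 ^+ 2 + nD ^+ 2).
  rewrite ler_norml in hH; case/andP: hH => hH _.
  have a1 : - (t1 * HT) <= t1 * nG * nD.
    rewrite -mulrA -mulrN; apply: ler_wpM2l; [exact: ltW | lra].
  apply: (le_trans a1).
  have a2 : t1 * nG * nD <= mu' * nD0 * nD by rewrite ler_wpM2r.
  apply: (le_trans a2).
  have := young nD0 nD ltr01; rewrite mul1r divr1 => a3.
  rewrite -mulrA; apply: le_trans (ler_wpM2l mu'0 a3) _; lra.
have hB : th * B <= psi / 2 * W - th0 * psi / 2 * (V + nD ^+ 2).
  have -> : th * B = th * psi / 2 * W - th * psi / 2 * (V + nD ^+ 2).
    have -> : B = psi / 2 * (W - V - nD ^+ 2) by lra.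
    ring.
  have pW : 0 <= psi / 2 * W by rewrite mulr_ge0 // divr_ge0 //; lra.
  have pQ : 0 <= psi / 2 * (V + nD ^+ 2) by rewrite mulr_ge0 ?addr_ge0 ?sqr_ge0 // divr_ge0 //; lra.
  have c1 : th * psi / 2 * W <= psi / 2 * W.
    have -> : th * psi / 2 * W = th * (psi / 2 * W) by ring.
    by have := ler_wpM2r pW th_le; rewrite mul1r.
  have c2 : th0 * psi / 2 * (V + nD ^+ 2) <= th * psi / 2 * (V + nD ^+ 2).
    have -> : th0 * psi / 2 * (V + nD ^+ 2) = th0 * (psi / 2 * (V + nD ^+ 2)) by ring.
    have -> : th * psi / 2 * (V + nD ^+ 2) = th * (psi / 2 * (V + nD ^+ 2)) by ring.
    by have := ler_wpM2r pQ th_ge.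
  lra.
have hW : psi * W <= (1 + psi^-1) * W.
  rewrite ler_wpM2r //.
  have p0 : 0 < psi by lra.
  rewrite -(ler_pM2l p0) mulrDr mulfV ?gt_eqF // mulr1 -expr2; lra.
have eA' : A = q / 2 * (sqZ2 - sqZ3) - (1 + psi^-1) / 2 * W.
  lra.
have eC' : C / beta = sqY0 / beta / 2 - nDy ^+ 2 / beta / 2 - sqY1 / beta / 2.
  have -> : C = (sqY0 - nDy ^+ 2 - sqY1) / 2 by lra.
  by field; rewrite gt_eqF.
have e1 : t1 * (KT + HT) = t1 * KT + t1 * HT by ring.
rewrite e1 eA' eC' in h1.
have e2 : rho0 * mu / 2 * (nD ^+ 2 + nDy ^+ 2 / beta) = rho0 * mu / 2 * nD ^+ 2 + rho0 * mu * (nDy ^+ 2 / beta) / 2 by ring.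
rewrite e2 in hKT.
have e3 : (1 - rho0 * mu) / beta / 2 * nDy ^+ 2 = nDy ^+ 2 / beta / 2 - rho0 * mu * (nDy ^+ 2 / beta) / 2 by ring.
rewrite e3.
have e4 : psi / 2 * W = psi * W / 2 by ring.
have e5 : (1 + psi^-1) / 2 * W = (1 + psi^-1) * W / 2 by ring.
rewrite e4 in hB; rewrite e5 in h1.
lra.
Qed.

Variable k : nat.
Implicit Types a b : 'rV[R]_k.

Lemma ident1 (psi : R) (x2 z2 z3 xh : 'rV[R]_k) : psi != 0 -> psi - 1 != 0 ->
  z3 = ((psi - 1) / psi) *: x2 + psi^-1 *: z2 ->
  2 * dotv (x2 - z2) (xh - x2) = psi / (psi - 1) * (dotv (z2 - xh) (z2 - xh) - dotv (z3 - xh) (z3 - xh))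
    - (1 + psi^-1) * dotv (x2 - z2) (x2 - z2).
Proof.
move=> p0 p1 ez.
have e1 : z3 - xh = ((psi - 1) / psi) *: (x2 - xh) + psi^-1 *: (z2 - xh).
  by rewrite ez; apply/rowP => j; rewrite !mxE; field.
have e2 : x2 - z2 = (x2 - xh) - (z2 - xh) by apply/rowP => j; rewrite !mxE; ring.
have e3 : xh - x2 = - (x2 - xh) by rewrite opprB.
rewrite e1 e2 e3.
move: (x2 - xh) (z2 - xh) => a b.
rewrite ?dotvDl ?dotvDr ?dotvBl ?dotvBr ?dotvNl ?dotvNr ?dotvZl ?dotvZr (dotvC b a).
by field; rewrite p0 p1.
Qed.

Lemma ident2 (psi : R) (x1 x2 z1 z2 : 'rV[R]_k) : psi != 0 ->
  z2 = ((psi - 1) / psi) *: x1 + psi^-1 *: z1 ->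
  2 * dotv (x1 - z1) (x2 - x1) = psi * (dotv (x2 - z2) (x2 - z2) - dotv (x1 - z2) (x1 - z2)
    - dotv (x2 - x1) (x2 - x1)).
Proof.
move=> p0 ez.
have e1 : x1 - z1 = psi *: (x1 - z2) by rewrite ez; apply/rowP => j; rewrite !mxE; field.
have e2 : x2 - z2 = (x1 - z2) + (x2 - x1) by apply/rowP => j; rewrite !mxE; ring.
rewrite e1 e2.
move: (x1 - z2) (x2 - x1) => a b.
rewrite ?dotvDl ?dotvDr ?dotvZl (dotvC b a); ring.
Qed.

Lemma ident3 (y0 y1 yh : 'rV[R]_k) :
  2 * dotv (y1 - y0) (yh - y1) = dotv (y0 - yh) (y0 - yh) - dotv (y1 - y0) (y1 - y0)
    - dotv (y1 - yh) (y1 - yh).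
Proof.
have e1 : y0 - yh = - ((y1 - y0) + (yh - y1)) by apply/rowP => j; rewrite !mxE; ring.
have e2 : y1 - yh = - (yh - y1) by rewrite opprB.
rewrite e1 e2.
move: (y1 - y0) (yh - y1) => a b.
rewrite ?dotvNl ?dotvNr ?dotvDl ?dotvDr (dotvC b a); ring.
Qed.

End EnergyReal.

Section Cluster.
Variable R : realType.

Lemma dotv_row_mx (N1 N2 : nat) (a : 'rV[R]_N1) (b : 'rV[R]_N2) :
  dotv (row_mx a b) (row_mx a b) = dotv a a + dotv b b.
Proof. by rewrite /dotv tr_row_mx mul_row_col mxE. Qed.

Lemma enorm_row_mxl (N1 N2 : nat) (a : 'rV[R]_N1) (b : 'rV[R]_N2) :
  enorm a <= enorm (row_mx a b).
Proof.
rewrite -(ler_sqr (enorm_ge0 _) (enorm_ge0 _)) !enorm_sq dotv_row_mx lerDl.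
exact: dotvv_ge0.
Qed.

Lemma enorm_row_mxr (N1 N2 : nat) (a : 'rV[R]_N1) (b : 'rV[R]_N2) :
  enorm b <= enorm (row_mx a b).
Proof.
rewrite -(ler_sqr (enorm_ge0 _) (enorm_ge0 _)) !enorm_sq dotv_row_mx lerDr.
exact: dotvv_ge0.
Qed.

Lemma enorm_row_mx_le (N1 N2 : nat) (a : 'rV[R]_N1) (b : 'rV[R]_N2) :
  enorm (row_mx a b) <= enorm a + enorm b.
Proof.
have ea := enorm_ge0 a; have eb := enorm_ge0 b.
rewrite -(ler_sqr (enorm_ge0 _)); last by rewrite nnegrE addr_ge0.
rewrite enorm_sq dotv_row_mx -!enorm_sq; nra.
Qed.

Lemma nbhs_enorm (k : nat) (p : 'rV[R]_k) (e : R) : 0 < e -> nbhs p [set v | enorm (v - p) < e].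
Proof.
move=> e0; have [d d0 Hd] := enorm_small k e0.
have hb : nbhs p (ball p d) by apply: nbhsx_ballx.
apply: filterS hb => v.
rewrite -ball_normE /ball_ /= => hv.
by rewrite enormB; apply: Hd.
Qed.

Lemma nbhs_enorm_inv (k : nat) (p : 'rV[R]_k) (V : set 'rV[R]_k) : nbhs p V ->
  exists2 d, 0 < d & forall v, enorm (v - p) < d -> V v.
Proof.
move=> /nbhs_ballP [d d0 Hd]; exists d => // v hv; apply: Hd.
rewrite -ball_normE /ball_ /=; apply: le_lt_trans (mxnorm_le_enorm _) _.
by rewrite enormB.
Qed.

Lemma cluster_rV (N1 N2 : nat) (X : nat -> 'rV[R]_N1) (Y : nat -> 'rV[R]_N2) (B : R) (N : nat) :
  (forall k, (N <= k)%N -> enorm (X k) <= B /\ enorm (Y k) <= B) ->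
  exists xs ys, forall e, 0 < e -> forall M, exists k, [/\ (M <= k)%N, enorm (X k - xs) < e & enorm (Y k - ys) < e].
Proof.
move=> HB.
pose U j := row_mx (X (j + N)%N) (Y (j + N)%N).
pose A := [set v : 'rV[R]_(N1 + N2) | forall i, `[- (2 * B), 2 * B]%classic (v ord0 i)].
have cA : compact A.
  by apply: (@rV_compact _ _ (fun=> `[- (2 * B), 2 * B]%classic)) => _; apply: segment_compact.
have FA : (U @ \oo) A.
  exists 0%N => // j _ i /=.
  have [h1 h2] := HB (j + N)%N (leq_addl _ _).
  have := entry_le_enorm (U j) i; have := enorm_row_mx_le (X (j + N)%N) (Y (j + N)%N).
  rewrite /= in_itv /=; move=> h3 h4.
  have := ler_norml (U j 0 i) (2 * B); rewrite -/(U j) => <-.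
  lra.
have [p [_ cp]] := cA _ _ FA.
exists (lsubmx p), (rsubmx p) => e e0 M.
have FM : (U @ \oo) [set v | exists j, (M <= j)%N /\ v = U j].
  by exists M => // j hj; exists j.
have [v [[j [hj ->]] hv]] := cp _ _ FM (nbhs_enorm p e0).
exists (j + N)%N; split; first exact: leq_trans hj (leq_addr _ _).
- apply: le_lt_trans hv.
  have -> : U j - p = row_mx (X (j + N)%N - lsubmx p) (Y (j + N)%N - rsubmx p).
    by rewrite -{1}(hsubmxK p) opp_row_mx add_row_mx.
  exact: enorm_row_mxl.
- apply: le_lt_trans hv.
  have -> : U j - p = row_mx (X (j + N)%N - lsubmx p) (Y (j + N)%N - rsubmx p).
    by rewrite -{1}(hsubmxK p) opp_row_mx add_row_mx.
  exact: enorm_row_mxr.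
Qed.


Definition tends0 (u : nat -> R) := forall e, 0 < e -> exists M, forall k, (M <= k)%N -> u k < e.

Lemma tends0_le (a b : nat -> R) : (forall k, a k <= b k) -> tends0 b -> tends0 a.
Proof. move=> hab hb e e0; have [M HM] := hb e e0; exists M => k hk; exact: le_lt_trans (hab k) (HM k hk). Qed.

Lemma tends0_add (a b : nat -> R) : tends0 a -> tends0 b -> tends0 (fun k => a k + b k).
Proof.
move=> ha hb e e0.
have e2 : 0 < e / 2 by rewrite divr_gt0.
have [M1 H1] := ha _ e2; have [M2 H2] := hb _ e2.
exists (maxn M1 M2) => k hk.
have := H1 k (leq_trans (leq_maxl _ _) hk); have := H2 k (leq_trans (leq_maxr _ _) hk); lra.
Qed.

Lemma tends0_shift (a : nat -> R) : tends0 a -> tends0 (fun k => a k.+1).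
Proof. move=> ha e e0; have [M HM] := ha e e0; exists M => k hk; apply: HM; exact: leq_trans hk _. Qed.

Lemma tends0_sqrt (a : nat -> R) : (forall k, 0 <= a k) -> tends0 (fun k => a k ^+ 2) -> tends0 a.
Proof.
move=> a0 ha e e0; have [M HM] := ha (e ^+ 2) (exprn_gt0 _ e0).
exists M => k hk; have := HM k hk.
by rewrite ltr_sqr ?nnegrE // ltW.
Qed.


Lemma tends0_le_mul (a b : nat -> R) (c : R) : 0 < c -> (forall k, a k <= c * b k) -> tends0 b -> tends0 a.
Proof.
move=> c0 hab hb e e0; have [M HM] := hb (e / c) (divr_gt0 e0 c0).
exists M => k hk; apply: le_lt_trans (hab k) _.
by rewrite mulrC -ltr_pdivlMr // HM.
Qed.

End Cluster.

Section Main.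
Variables (R : realType) (n m : nat)
  (f : 'rV[R]_n -> \bar R) (g : 'rV[R]_m -> \bar R)
  (K : 'M[R]_(n, m)) (h : 'rV[R]_n -> R) (gradh : 'rV[R]_n -> 'rV[R]_n)
  (Lbar : R) (beta psi mu mu' tau0 : R)
  (z x : nat -> 'rV[R]_n) (w y : nat -> 'rV[R]_m) (tau : nat -> R).
Hypotheses (fprop : proper_fun f) (fcvx : convex_efun f) (flsc : lower_semicontinuous f)
  (gprop : proper_fun g) (gcvx : convex_efun g)
  (hcvx : convex_rfun h) (hgrad : is_gradient h gradh) (L0 : 0 <= Lbar)
  (hlip : lipschitz_with Lbar gradh)
  (b0 : 0 < beta) (psi1 : 1 < psi) (psig : psi <= golden) (mu'0 : 0 < 2 * mu')
  (mumu' : 2 * mu' < mu) (mupsi : mu < psi / 2) (tau00 : 0 < tau0)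
  (etau0 : tau 0%N = tau0)
  (ez : forall k : nat, z k.+1 = ((psi - 1) / psi) *: x k + psi^-1 *: z k)
  (ex : forall k : nat, is_prox (tau k) f
       (z k.+1 - tau k *: (y k *m K^T) - tau k *: gradh (x k)) (x k.+1))
  (etau : forall k : nat, tau k.+1 =
       min_ratio
         (min_ratio (tau k) (mu * enorm (x k.+1 - x k))
                    (Num.sqrt beta * enorm (x k.+1 *m K - x k *m K)))
         (mu' * enorm (x k.+1 - x k))
         (enorm (gradh (x k.+1) - gradh (x k))))
  (ew : forall k : nat, is_prox (beta * tau k.+1)^-1 g
       ((beta * tau k.+1)^-1 *: y k + x k.+1 *m K) (w k.+1))
  (ey : forall k : nat, y k.+1 = y k + (beta * tau k.+1) *: (x k.+1 *m K - w k.+1)).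

Lemma psi_sq : psi ^+ 2 <= psi + 1.
Proof.
move: psig; rewrite /golden => hp.
have s5 : Num.sqrt 5 ^+ 2 = 5 :> R by rewrite sqr_sqrtr.
have s50 := sqrtr_ge0 (5 : R).
have h0 : 2 * psi - 1 <= Num.sqrt 5.
  by move: hp; rewrite ler_pdivlMr; lra.
have h1 : 0 <= (Num.sqrt 5 - (2 * psi - 1)) * (Num.sqrt 5 + (2 * psi - 1)).
  have p1 := psi1; by apply: mulr_ge0; [rewrite subr_ge0 | apply: addr_ge0 => //; lra].
have e : (Num.sqrt 5 - (2 * psi - 1)) * (Num.sqrt 5 + (2 * psi - 1)) = Num.sqrt 5 ^+ 2 - (2 * psi - 1) ^+ 2.
  by ring.
rewrite e s5 in h1; nra.
Qed.

Lemma psi_lt2 : psi < 2.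
Proof. have := psi_sq; have := psi1; nra. Qed.

Lemma mu_pos : 0 < mu. Proof. have := mumu'; have := mu'0; lra. Qed.
Lemma mu'_pos : 0 < mu'. Proof. have := mu'0; lra. Qed.
Lemma mu_lt1 : mu < 1. Proof. have := psi_lt2; have := mupsi; lra. Qed.

Let s := Num.sqrt beta.
Lemma s_pos : 0 < s. Proof. by rewrite sqrtr_gt0. Qed.
Lemma s_sq : s ^+ 2 = beta. Proof. by rewrite sqr_sqrtr // ltW. Qed.

Lemma tau_facts : exists2 tmin, 0 < tmin & forall k,
  [/\ tmin <= tau k, tau k.+1 <= tau k,
      tau k.+1 * (s * enorm ((x k.+1 - x k) *m K)) <= mu * enorm (x k.+1 - x k) &
      tau k.+1 * enorm (gradh (x k.+1) - gradh (x k)) <= mu' * enorm (x k.+1 - x k)].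
Proof.
have L0' := L0; have tau00' := tau00.
have [cK cK0 HK] := Kbound K.
pose C1 := s * cK / mu.
pose C2 := (Lbar + 1) / mu'.
have C10 : 0 < C1 by rewrite /C1 divr_gt0 ?mulr_gt0 ?s_pos ?mu_pos.
have C20 : 0 < C2 by rewrite /C2 divr_gt0 ?mu'_pos //; lra.
pose tmin := Num.min tau0 (Num.min C1^-1 C2^-1).
have tmin0 : 0 < tmin by rewrite /tmin !lt_min tau00 !invr_gt0 C10 C20.
have hmu := mu_pos; have hmu' := mu'_pos; have hs := s_pos.
have step k : [/\ Num.min (tau k) tmin <= tau k.+1, tau k.+1 <= tau k,
      tau k.+1 * (s * enorm ((x k.+1 - x k) *m K)) <= mu * enorm (x k.+1 - x k) &
      tau k.+1 * enorm (gradh (x k.+1) - gradh (x k)) <= mu' * enorm (x k.+1 - x k)].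
  rewrite etau -mulmxBl.
  set e := enorm (x k.+1 - x k).
  have e0 : 0 <= e by apply: enorm_ge0.
  set inner := min_ratio (tau k) _ _.
  have b1 : 0 <= s * enorm ((x k.+1 - x k) *m K) by rewrite mulr_ge0 ?enorm_ge0 ?ltW.
  have b2 : 0 <= enorm (gradh (x k.+1) - gradh (x k)) by apply: enorm_ge0.
  have i1 : inner <= tau k by apply: min_ratio_le.
  have o1 : min_ratio inner (mu' * e) (enorm (gradh (x k.+1) - gradh (x k))) <= inner by apply: min_ratio_le.
  split.
  - have g1 : Num.min (tau k) C1^-1 <= inner.
      apply: min_ratio_ge => //.
      have := HK (x k.+1 - x k); rewrite -/e => hk.
      have -> : C1 * (mu * e) = s * (cK * e) by rewrite /C1; field; rewrite !gt_eqF.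
      by rewrite ler_wpM2l // ltW.
    have g2 : Num.min inner C2^-1 <= min_ratio inner (mu' * e) (enorm (gradh (x k.+1) - gradh (x k))).
      apply: min_ratio_ge => //.
      have := hlip (x k.+1) (x k); rewrite -/e => hk.
      have -> : C2 * (mu' * e) = (Lbar + 1) * e by rewrite /C2; field; rewrite !gt_eqF.
      apply: le_trans hk _; rewrite ler_wpM2r //; lra.
    apply: le_trans g2; rewrite le_min; apply/andP; split.
      apply: le_trans g1; rewrite le_min ge_min lexx /= ge_min; apply/orP; right.
      by rewrite /tmin ge_min ge_min lexx orbT.
    by rewrite ge_min; apply/orP; right; rewrite /tmin ge_min ge_min lexx !orbT.
  - exact: le_trans o1 i1.
  - have hm : inner * (s * enorm ((x k.+1 - x k) *m K)) <= mu * e.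
      by apply: min_ratio_mul => //; rewrite mulr_ge0 // ltW.
    exact: le_trans (ler_wpM2r b1 o1) hm.
  - by apply: min_ratio_mul => //; rewrite mulr_ge0 // ltW.
exists tmin => // k.
have [_ s2 s3 s4] := step k; split => //.
clear s2 s3 s4; elim: k => [|k IH]; first by rewrite etau0 /tmin ge_min lexx.
have [s1 _ _ _] := step k.
by apply: le_trans s1; rewrite le_min IH lexx.
Qed.


Definition Fx k := fine (f (x k)).
Definition Gy k := fine (fconj g (y k)).

Lemma tau_pos k : 0 < tau k.
Proof. have [tm tm0 H] := tau_facts; have [h1 _ _ _] := H k; exact: lt_le_trans h1. Qed.

Lemma prim k : f (x k.+1) = (Fx k.+1)%:E /\
  forall u Fu, f u = Fu%:E ->
    Fx k.+1 + (tau k)^-1 * dotv (z k.+1 - x k.+1) (u - x k.+1)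
    - dotv ((u - x k.+1) *m K) (y k) - dotv (gradh (x k)) (u - x k.+1) <= Fu.
Proof.
have t0 := tau_pos k.
have [Fp [eF HP]] := prox_vi t0 fprop fcvx (ex k).
rewrite /Fx eF /=; split => // u Fu eu.
have hp := HP u Fu eu.
have e : dotv (z k.+1 - tau k *: (y k *m K^T) - tau k *: gradh (x k) - x k.+1) (u - x k.+1)
   = dotv (z k.+1 - x k.+1) (u - x k.+1) - tau k * dotv ((u - x k.+1) *m K) (y k)
     - tau k * dotv (gradh (x k)) (u - x k.+1).
  have -> : z k.+1 - tau k *: (y k *m K^T) - tau k *: gradh (x k) - x k.+1
     = (z k.+1 - x k.+1) - (tau k *: (y k *m K^T) + tau k *: gradh (x k)).
    by apply/rowP => j; rewrite !mxE; ring.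
  move: (z k.+1 - x k.+1) (u - x k.+1) => a c.
  rewrite dotvBl dotvDl !dotvZl (dotv_mulK K c (y k)) (dotvC c (y k *m K^T)); ring.
rewrite e in hp.
have e2 : (tau k)^-1 * (dotv (z k.+1 - x k.+1) (u - x k.+1) - tau k * dotv ((u - x k.+1) *m K) (y k)
     - tau k * dotv (gradh (x k)) (u - x k.+1)) =
  (tau k)^-1 * dotv (z k.+1 - x k.+1) (u - x k.+1) - dotv ((u - x k.+1) *m K) (y k)
     - dotv (gradh (x k)) (u - x k.+1) by field; rewrite !gt_eqF.
rewrite e2 in hp; lra.
Qed.

Lemma dual k : fconj g (y k.+1) = (Gy k.+1)%:E /\
  forall v Gv, fconj g v = Gv%:E ->
    Gy k.+1 + dotv (x k.+1 *m K) (v - y k.+1)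
    + (beta * tau k.+1)^-1 * dotv (y k - y k.+1) (v - y k.+1) <= Gv.
Proof.
have t1 := tau_pos k.+1; have b0' := b0.
have bt : 0 < beta * tau k.+1 by rewrite mulr_gt0.
have lam0 : 0 < (beta * tau k.+1)^-1 by rewrite invr_gt0.
have [Gw [eG HG]] := prox_vi lam0 gprop gcvx (ew k).
have key : forall u gu, g u = gu%:E -> Gw + dotv (y k.+1) (u - w k.+1) <= gu.
  move=> u gu eu; have := HG u gu eu.
  rewrite invrK -dotvZl.
  have e : (beta * tau k.+1) *: ((beta * tau k.+1)^-1 *: y k + x k.+1 *m K - w k.+1) = y k.+1.
    by rewrite ey; apply/rowP => j; rewrite !mxE; field; rewrite !gt_eqF.
  by rewrite e.
have ub := fconj_ub eG key gprop.2.
have [r er] := finE (fconj_ninfty (y k.+1) gprop) (le_lt_trans ub (ltry _)).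
rewrite /Gy er /=; split => // v Gv ev.
have lb := fconj_lb v eG; rewrite ev lee_fin in lb.
rewrite er lee_fin in ub.
have ew' : w k.+1 = x k.+1 *m K + (beta * tau k.+1)^-1 *: (y k - y k.+1).
  by rewrite ey; apply/rowP => j; rewrite !mxE; field; rewrite !gt_eqF.
have : r + dotv (w k.+1) (v - y k.+1) <= Gv by rewrite dotvBr; lra.
have e3 : dotv (w k.+1) (v - y k.+1) = dotv (x k.+1 *m K) (v - y k.+1)
    + (beta * tau k.+1)^-1 * dotv (y k - y k.+1) (v - y k.+1).
  by rewrite ew'; move: (y k - y k.+1) (v - y k.+1) => a c; rewrite dotvDl dotvZl.
by rewrite e3 addrA.
Qed.


Lemma saddle_real xh yh : saddle_point f h K g xh yh -> exists Fh Gh,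
  [/\ f xh = Fh%:E, fconj g yh = Gh%:E,
   (forall u Fu, f u = Fu%:E -> Fh + h xh + dotv (xh *m K) yh <= Fu + h u + dotv (u *m K) yh) &
   (forall v Gv, fconj g v = Gv%:E -> Gh - dotv (xh *m K) yh <= Gv - dotv (xh *m K) v)].
Proof.
case=> ffin [gfin H].
set Fh := fine (f xh); set Gh := fine (fconj g yh).
have eF : f xh = Fh%:E by rewrite /Fh fineK.
have eG : fconj g yh = Gh%:E by rewrite /Gh fineK.
exists Fh, Gh; split => //.
  move=> u Fu eu; have [_ H2] := H u yh; move: H2.
  rewrite /lagr eu eF eG -!EFinD lee_fin; lra.
move=> v Gv ev; have [H1 _] := H xh v; move: H1.
rewrite /lagr ev eF eG -!EFinD lee_fin; lra.
Qed.

Lemma real_saddle xh yh Fh Gh : f xh = Fh%:E -> fconj g yh = Gh%:E ->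
   (forall u Fu, f u = Fu%:E -> Fh + h xh + dotv (xh *m K) yh <= Fu + h u + dotv (u *m K) yh) ->
   (forall v Gv, fconj g v = Gv%:E -> Gh - dotv (xh *m K) yh <= Gv - dotv (xh *m K) v) ->
   saddle_point f h K g xh yh.
Proof.
move=> eF eG S1 S2; split; first by rewrite eF.
split; first by rewrite eG.
move=> u v; split.
  rewrite /lagr eF eG.
  case E: (fconj g v) (fconj_ninfty v gprop) => [Gv| |] // _.
    have := S2 v Gv E; rewrite -!EFinD lee_fin; lra.
  by rewrite /= leNye.
rewrite /lagr eF eG.
case E: (f u) (fprop.2 u) => [Fu| |] // _.
  have := S1 u Fu E; rewrite -!EFinD lee_fin; lra.
by rewrite /= leey.
Qed.


Definition Ey (xh : 'rV[R]_n) (yh : 'rV[R]_m) k :=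
  psi / (psi - 1) / 2 * dotv (z k.+2 - xh) (z k.+2 - xh)
  + dotv (y k - yh) (y k - yh) / beta / 2 + mu' / 2 * enorm (x k.+1 - x k) ^+ 2.

Lemma energy xh yh Fh Gh th0 rho0 k : f xh = Fh%:E -> fconj g yh = Gh%:E ->
   (forall u Fu, f u = Fu%:E -> Fh + h xh + dotv (xh *m K) yh <= Fu + h u + dotv (u *m K) yh) ->
   (forall v Gv, fconj g v = Gv%:E -> Gh - dotv (xh *m K) yh <= Gv - dotv (xh *m K) v) ->
   0 < th0 -> th0 * tau k <= tau k.+1 -> tau k.+1 <= rho0 * tau k.+2 ->
   Ey xh yh k.+1 + th0 * psi / 2 * dotv (x k.+1 - z k.+2) (x k.+1 - z k.+2)
   + (th0 * psi - rho0 * mu - 2 * mu') / 2 * enorm (x k.+2 - x k.+1) ^+ 2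
   + (1 - rho0 * mu) / beta / 2 * enorm (y k.+1 - y k) ^+ 2 <= Ey xh yh k.
Proof.
move=> eF eG S1 S2 th00 hth hrho.
have [tm tm0 TF] := tau_facts.
have [_ t21 stK _] := TF k.+1.
have [_ t10 _ stH] := TF k.
have [eF2 P1] := prim k.+1.
have [eF1 P0] := prim k.
have [eG1 D0] := dual k.
have h1 := P1 xh Fh eF.
have h2 := P0 (x k.+2) (Fx k.+2) eF2.
have h3 := D0 yh Gh eG.
have h4 := S1 (x k.+1) (Fx k.+1) eF1.
have h5 := S2 (y k.+1) (Gy k.+1) eG1.
have h6 := grad_ineq hcvx hgrad (x k.+1) xh.
set A := dotv (x k.+2 - z k.+2) (xh - x k.+2).
set B := dotv (x k.+1 - z k.+1) (x k.+2 - x k.+1).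
set C := dotv (y k.+1 - y k) (yh - y k.+1).
have eA1 : dotv (z k.+2 - x k.+2) (xh - x k.+2) = - A by rewrite /A -dotvNl opprB.
have eB1 : dotv (z k.+1 - x k.+1) (x k.+2 - x k.+1) = - B by rewrite /B -dotvNl opprB.
have eC1 : dotv (y k - y k.+1) (yh - y k.+1) = - C by rewrite /C -dotvNl opprB.
rewrite eA1 in h1; rewrite eB1 in h2; rewrite eC1 in h3.
have core : dotv ((x k.+2 - x k.+1) *m K) (y k.+1 - y k)
    + dotv (gradh (x k.+1) - gradh (x k)) (x k.+2 - x k.+1)
    <= A / tau k.+1 + B / tau k + C / (beta * tau k.+1).
  move: h1 h2 h3 h4 h5 h6.
  rewrite ?mulmxBl ?dotvBl ?dotvBr.
  move=> h1 h2 h3 h4 h5 h6; lra.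
have p0 : psi != 0 by rewrite gt_eqF //; have := psi1; lra.
have p1 : psi - 1 != 0 by rewrite gt_eqF //; have := psi1; lra.
have eA := ident1 xh p0 p1 (ez k.+2); rewrite -/A in eA.
have eB := ident2 (x k.+2) p0 (ez k.+1); rewrite -/B -(enorm_sq (x k.+2 - x k.+1)) in eB.
have eC := ident3 (y k) (y k.+1) yh; rewrite -/C -(enorm_sq (y k.+1 - y k)) in eC.
have hK := CS ((x k.+2 - x k.+1) *m K) (y k.+1 - y k).
have hH := CS (gradh (x k.+1) - gradh (x k)) (x k.+2 - x k.+1).
rewrite mulrA in stK.
have := energy_real (tau_pos k) (tau_pos k.+1) (tau_pos k.+2) s_pos s_sq psi1 psi_sq
  (ltW mu_pos) (ltW mu'_pos) th00 hth t10 hrho (enorm_ge0 _) (enorm_ge0 _) (enorm_ge0 _)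
  (enorm_ge0 _) (enorm_ge0 _) (dotvv_ge0 _) (dotvv_ge0 (x k.+1 - z k.+2)) core eA eB eC hK stK hH stH.
by rewrite /Ey.
Qed.


Lemma ratio_eventually : exists del N, [/\ 0 < del, 0 < (1 - del) * psi - (1 + del) * mu - 2 * mu',
   0 < 1 - (1 + del) * mu, 0 < 1 - del &
   forall j, (N <= j)%N -> tau j <= (1 + del) * tau j.+1].
Proof.
have p2 := psi_lt2; have p1 := psi1; have m1 := mumu'; have m2 := mu'0; have m3 := mupsi.
have hmu : 0 < mu by lra.
pose gap := psi - mu - 2 * mu'.
have gap0 : 0 < gap by rewrite /gap; lra.
have mu1 : mu < 1 by lra.
pose del := gap * (1 - mu) / 8.
have del0 : 0 < del by rewrite /del divr_gt0 // mulr_gt0 //; lra.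
have delle : del * 8 = gap * (1 - mu) by rewrite /del; field.
have [tm tm0 H] := tau_facts.
have Hdec k : tau k.+1 <= tau k by case: (H k).
have Hlb k : tm <= tau k by case: (H k).
have [N [_ HN]] := noninc_inf (u := tau) (n0 := 0%N) (lb := tm)
   (fun k _ => Hdec k) Hlb (mulr_gt0 del0 tm0).
have gap2 : gap < 2 by rewrite /gap; lra.
have d1 : del <= (1 - mu) / 4.
  have : gap * (1 - mu) <= 2 * (1 - mu) by rewrite ler_wpM2r; lra.
  lra.
have d2 : del * (psi + mu) <= gap / 2.
  have h1 : (1 - mu) * (psi + mu) <= 4 by nra.
  have : del * (psi + mu) * 8 = gap * ((1 - mu) * (psi + mu)).
    by rewrite mulrAC delle; ring.
  have : gap * ((1 - mu) * (psi + mu)) <= gap * 4 by rewrite ler_wpM2l // ltW.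
  lra.
have d3 : del * mu <= del by rewrite ler_piMr ?ltW.
exists del, N; split => //.
- have -> : (1 - del) * psi - (1 + del) * mu - 2 * mu' = gap - del * (psi + mu) by rewrite /gap; ring.
  lra.
- lra.
- lra.
- move=> j hj.
  have hj1 : (N <= j.+1)%N by apply: leq_trans hj _.
  have := HN j.+1 hj1.
  have := noninc_le (u := tau) (n0 := 0%N) (fun k _ => Hdec k) (leq0n N) hj.
  have := Hlb j.+1.
  nra.
Qed.


Lemma eventual_energy : exists N c, 0 < c /\ forall xh yh Fh Gh, f xh = Fh%:E -> fconj g yh = Gh%:E ->
   (forall u Fu, f u = Fu%:E -> Fh + h xh + dotv (xh *m K) yh <= Fu + h u + dotv (u *m K) yh) ->
   (forall v Gv, fconj g v = Gv%:E -> Gh - dotv (xh *m K) yh <= Gv - dotv (xh *m K) v) ->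
   forall k, (N <= k)%N ->
   Ey xh yh k.+1 + c * (dotv (x k.+1 - z k.+2) (x k.+1 - z k.+2)
     + enorm (x k.+2 - x k.+1) ^+ 2 + enorm (y k.+1 - y k) ^+ 2) <= Ey xh yh k.
Proof.
have [del [N [del0 cD0 cY0 th00 HN]]] := ratio_eventually.
have p1 := psi1; have bb := b0.
pose cV := (1 - del) * psi / 2.
pose cD := ((1 - del) * psi - (1 + del) * mu - 2 * mu') / 2.
pose cY := (1 - (1 + del) * mu) / beta / 2.
have cV0 : 0 < cV by rewrite /cV divr_gt0 // mulr_gt0 //; lra.
have cD0' : 0 < cD by rewrite /cD divr_gt0.
have cY0' : 0 < cY by rewrite /cY !divr_gt0.
pose c := Num.min cV (Num.min cD cY).
exists N, c; split; first by rewrite /c !lt_min cV0 cD0' cY0'.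
move=> xh yh Fh Gh eF eG S1 S2 k hk.
have t0 := tau_pos k; have t1 := tau_pos k.+1.
have hth : (1 - del) * tau k <= tau k.+1.
  have := HN k hk; nra.
have hrho : tau k.+1 <= (1 + del) * tau k.+2 by apply: HN; apply: leq_trans hk _.
have := energy eF eG S1 S2 th00 hth hrho.
rewrite -/cV -/cD -/cY.
set V := dotv _ _; set D := enorm _ ^+ 2; set Dy := enorm (y k.+1 - y k) ^+ 2.
have V0 : 0 <= V by apply: dotvv_ge0.
have D0 : 0 <= D by apply: sqr_ge0.
have Dy0 : 0 <= Dy by apply: sqr_ge0.
have c1 : c * V <= cV * V by apply: ler_wpM2r => //; rewrite /c ge_min lexx.
have c2 : c * D <= cD * D by apply: ler_wpM2r => //; rewrite /c !ge_min lexx orbT.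
have c3 : c * Dy <= cY * Dy by apply: ler_wpM2r => //; rewrite /c !ge_min lexx !orbT.
have e : c * (V + D + Dy) = c * V + c * D + c * Dy by ring.
rewrite e; lra.
Qed.


Lemma q_pos : 0 < psi / (psi - 1) / 2.
Proof. have p1 := psi1; rewrite !divr_gt0 //; lra. Qed.

Lemma Ey_ge0 xh yh k : 0 <= Ey xh yh k.
Proof.
have q0 := q_pos; have bb := b0; have mm := mu'_pos.
rewrite /Ey; apply: addr_ge0; first apply: addr_ge0.
- by apply: mulr_ge0; [exact: ltW | exact: dotvv_ge0].
- by apply: divr_ge0; [apply: divr_ge0; [exact: dotvv_ge0 | exact: ltW] | ].
- by apply: mulr_ge0; [apply: divr_ge0; [exact: ltW|] | exact: sqr_ge0].
Qed.

Lemma decay xh yh Fh Gh : f xh = Fh%:E -> fconj g yh = Gh%:E ->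
   (forall u Fu, f u = Fu%:E -> Fh + h xh + dotv (xh *m K) yh <= Fu + h u + dotv (u *m K) yh) ->
   (forall v Gv, fconj g v = Gv%:E -> Gh - dotv (xh *m K) yh <= Gv - dotv (xh *m K) v) ->
   [/\ tends0 (fun k => dotv (x k.+1 - z k.+2) (x k.+1 - z k.+2)),
       tends0 (fun k => enorm (x k.+2 - x k.+1) ^+ 2),
       tends0 (fun k => enorm (y k.+1 - y k) ^+ 2) &
       exists N, forall k, (N <= k)%N -> Ey xh yh k.+1 <= Ey xh yh k].
Proof.
move=> eF eG S1 S2.
have [N [c [c0 HE]]] := eventual_energy.
have HE' := HE xh yh Fh Gh eF eG S1 S2.
pose V k := dotv (x k.+1 - z k.+2) (x k.+1 - z k.+2).
pose D k := enorm (x k.+2 - x k.+1) ^+ 2.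
pose Dy k := enorm (y k.+1 - y k) ^+ 2.
have V0 k : 0 <= V k by apply: dotvv_ge0.
have D0 k : 0 <= D k by apply: sqr_ge0.
have Dy0 k : 0 <= Dy k by apply: sqr_ge0.
have dec : forall k, (N <= k)%N -> Ey xh yh k.+1 <= Ey xh yh k.
  move=> k hk; have := HE' k hk; rewrite -/(V k) -/(D k) -/(Dy k).
  have : 0 <= c * (V k + D k + Dy k) by rewrite mulr_ge0 ?addr_ge0 // ltW.
  lra.
have hs : tends0 (fun k => V k + D k + Dy k).
  move=> e e0.
  have [M [hM HM]] := noninc_inf (u := Ey xh yh) (n0 := N) (lb := 0) dec (Ey_ge0 xh yh) (mulr_gt0 c0 e0).
  exists M => k hk.
  have h1 := HE' k (leq_trans hM hk); rewrite -/(V k) -/(D k) -/(Dy k) in h1.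
  have h2 := HM k.+1 (leq_trans hk (leqnSn _)).
  have h3 := noninc_le dec hM hk.
  have : c * (V k + D k + Dy k) < c * e by lra.
  by rewrite ltr_pM2l.
split.
- by apply: tends0_le hs => k; have := D0 k; have := Dy0 k; have := V0 k; rewrite /V /D /Dy /=; lra.
- by apply: tends0_le hs => k; have := D0 k; have := Dy0 k; have := V0 k; rewrite /V /D /Dy /=; lra.
- by apply: tends0_le hs => k; have := D0 k; have := Dy0 k; have := V0 k; rewrite /V /D /Dy /=; lra.
- by exists N.
Qed.

Lemma bounded_iter xh yh Fh Gh : f xh = Fh%:E -> fconj g yh = Gh%:E ->
   (forall u Fu, f u = Fu%:E -> Fh + h xh + dotv (xh *m K) yh <= Fu + h u + dotv (u *m K) yh) ->
   (forall v Gv, fconj g v = Gv%:E -> Gh - dotv (xh *m K) yh <= Gv - dotv (xh *m K) v) ->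
   exists N B, forall k, (N <= k)%N -> enorm (x k.+1) <= B /\ enorm (y k.+1) <= B.
Proof.
move=> eF eG S1 S2.
have [N [c [c0 HE]]] := eventual_energy.
have HE' := HE xh yh Fh Gh eF eG S1 S2.
have dec : forall k, (N <= k)%N -> Ey xh yh k.+1 <= Ey xh yh k.
  move=> k hk; have := HE' k hk.
  have : 0 <= c * (dotv (x k.+1 - z k.+2) (x k.+1 - z k.+2) + enorm (x k.+2 - x k.+1) ^+ 2
      + enorm (y k.+1 - y k) ^+ 2) by rewrite mulr_ge0 ?addr_ge0 ?dotvv_ge0 ?sqr_ge0 // ltW.
  lra.
set q := psi / (psi - 1) / 2.
have q0 : 0 < q := q_pos.
have bb := b0; have mm := mu'_pos.
set EN := Ey xh yh N.
have EN0 : 0 <= EN by apply: Ey_ge0.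
exists N, (3 + EN / c + EN / q + 2 * beta * EN + enorm xh + enorm yh) => k hk.
have hEk : Ey xh yh k <= EN := noninc_le dec (leqnn N) hk.
have hEk1 : Ey xh yh k.+1 <= EN := noninc_le dec (leqnn N) (leq_trans hk (leqnSn _)).
have hV : dotv (x k.+1 - z k.+2) (x k.+1 - z k.+2) <= EN / c.
  rewrite ler_pdivlMr // mulrC; have := HE' k hk.
  have := Ey_ge0 xh yh k.+1.
  have : 0 <= c * (enorm (x k.+2 - x k.+1) ^+ 2 + enorm (y k.+1 - y k) ^+ 2)
    by rewrite mulr_ge0 ?addr_ge0 ?sqr_ge0 // ltW.
  rewrite !mulrDr; lra.
have eEy k' : Ey xh yh k' = q * dotv (z k'.+2 - xh) (z k'.+2 - xh)
     + dotv (y k' - yh) (y k' - yh) / beta / 2 + mu' / 2 * enorm (x k'.+1 - x k') ^+ 2 by [].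
have t1 k' : 0 <= dotv (y k' - yh) (y k' - yh) / beta / 2.
  by apply: divr_ge0; [apply: divr_ge0; [exact: dotvv_ge0 | exact: ltW] | ].
have t2 k' : 0 <= mu' / 2 * enorm (x k'.+1 - x k') ^+ 2.
  by apply: mulr_ge0; [apply: divr_ge0; [exact: ltW|] | exact: sqr_ge0].
have t3 k' : 0 <= q * dotv (z k'.+2 - xh) (z k'.+2 - xh) by rewrite mulr_ge0 ?dotvv_ge0 // ltW.
have hZ : dotv (z k.+2 - xh) (z k.+2 - xh) <= EN / q.
  rewrite ler_pdivlMr // mulrC; have := eEy k; have := t1 k; have := t2 k; lra.
have hY : dotv (y k.+1 - yh) (y k.+1 - yh) <= 2 * beta * EN.
  have : dotv (y k.+1 - yh) (y k.+1 - yh) / beta / 2 <= EN.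
    have := eEy k.+1; have := t3 k.+1; have := t2 k.+1; lra.
  move=> hh.
  have e : dotv (y k.+1 - yh) (y k.+1 - yh)
      = 2 * beta * (dotv (y k.+1 - yh) (y k.+1 - yh) / beta / 2) by field; rewrite gt_eqF.
  rewrite {1}e; apply: ler_wpM2l hh; apply: mulr_ge0 => //; exact: ltW.
split.
- have -> : x k.+1 = (x k.+1 - z k.+2) + ((z k.+2 - xh) + xh) by rewrite !subrK.
  apply: le_trans (enormD _ _) _; apply: le_trans (lerD (lexx _) (enormD _ _)) _.
  have := enorm_le_sq (x k.+1 - z k.+2); have := enorm_le_sq (z k.+2 - xh).
  have := enorm_ge0 yh; have : 0 <= 2 * beta * EN by rewrite mulr_ge0 ?mulr_ge0 // ltW.
  lra.
- have -> : y k.+1 = (y k.+1 - yh) + yh by rewrite subrK.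
  apply: le_trans (enormD _ _) _.
  have := enorm_le_sq (y k.+1 - yh).
  have := enorm_ge0 xh; have : 0 <= EN / c by rewrite divr_ge0 // ltW.
  have : 0 <= EN / q by rewrite divr_ge0 // ltW.
  lra.
Qed.


Lemma err_primal (u xs x2 x1 z2 : 'rV[R]_n) (ys y1 : 'rV[R]_m) (t tm cK eps : R) :
  0 < tm -> tm <= t -> 0 <= eps -> eps <= 1 -> 0 <= cK ->
  (forall v, enorm (v *m K) <= cK * enorm v) ->
  enorm (x2 - xs) <= eps -> enorm (y1 - ys) <= eps -> enorm (x1 - xs) <= eps -> enorm (z2 - x2) <= eps ->
  - (t^-1 * dotv (z2 - x2) (u - x2)) + dotv ((u - x2) *m K) y1 + dotv (gradh x1) (u - x2)
   <= dotv ((u - xs) *m K) ys + dotv (gradh xs) (u - xs)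
      + eps * (cK * (enorm (u - xs) + 1) + cK * enorm ys + Lbar * (enorm (u - xs) + 1)
               + enorm (gradh xs) + tm^-1 * (enorm (u - xs) + 1)).
Proof.
move=> tm0 tmt e0 e1 cK0 HK ha hb hc hd.
have LL := L0.
set ru := enorm (u - xs) + 1.
have hr : enorm (u - x2) <= ru.
  have -> : u - x2 = (u - xs) + (xs - x2) by rewrite addrA subrK.
  apply: le_trans (enormD _ _) _; rewrite (enormB xs); rewrite /ru; lra.
have ru0 : 0 <= ru by apply: le_trans (enorm_ge0 _) hr.
have t0 : 0 < t by apply: lt_le_trans tmt.
have i1 : - (t^-1 * dotv (z2 - x2) (u - x2)) <= eps * (tm^-1 * ru).
  have a1 : `|dotv (z2 - x2) (u - x2)| <= eps * ru.
    apply: le_trans (CS _ _) _; apply: ler_pM => //; exact: enorm_ge0.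
  have a2 : t^-1 <= tm^-1 by rewrite lef_pV2 ?posrE.
  have a3 : t^-1 * `|dotv (z2 - x2) (u - x2)| <= tm^-1 * (eps * ru).
    by apply: ler_pM => //; rewrite ?invr_ge0 ?ltW.
  have a4 : - (t^-1 * dotv (z2 - x2) (u - x2)) <= t^-1 * `|dotv (z2 - x2) (u - x2)|.
    rewrite -mulrN; apply: ler_wpM2l; first by rewrite invr_ge0 ltW.
    by rewrite -normrN ler_norm.
  have -> : eps * (tm^-1 * ru) = tm^-1 * (eps * ru) by ring.
  exact: le_trans a4 a3.
have eK : dotv ((u - x2) *m K) y1 = dotv ((u - xs) *m K) ys - dotv ((x2 - xs) *m K) ys
    + dotv ((u - x2) *m K) (y1 - ys).
  have -> : (u - x2) *m K = (u - xs) *m K - (x2 - xs) *m K by rewrite -mulmxBl; congr (_ *m _);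
     apply/rowP => j; rewrite !mxE; ring.
  rewrite !dotvBl !dotvBr; ring.
have i2 : - dotv ((x2 - xs) *m K) ys <= eps * (cK * enorm ys).
  apply: le_trans (ler_norm _) _; rewrite normrN.
  apply: le_trans (CS _ _) _.
  have := HK (x2 - xs); move=> hk.
  have : enorm ((x2 - xs) *m K) <= cK * eps by apply: le_trans hk _; rewrite ler_wpM2l.
  move=> hk2; have := enorm_ge0 ys; have := enorm_ge0 ((x2 - xs) *m K); nra.
have i3 : dotv ((u - x2) *m K) (y1 - ys) <= eps * (cK * ru).
  apply: le_trans (dotv_le _ _) _.
  have hk : enorm ((u - x2) *m K) <= cK * ru by apply: le_trans (HK _) _; rewrite ler_wpM2l.
  have := enorm_ge0 (y1 - ys); have := enorm_ge0 ((u - x2) *m K).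
  have : 0 <= cK * ru by rewrite mulr_ge0.
  nra.
have eH : dotv (gradh x1) (u - x2) = dotv (gradh xs) (u - xs) - dotv (gradh xs) (x2 - xs)
    + dotv (gradh x1 - gradh xs) (u - x2).
  have -> : u - x2 = (u - xs) - (x2 - xs) by apply/rowP => j; rewrite !mxE; ring.
  rewrite !dotvBl !dotvBr; ring.
have i4 : - dotv (gradh xs) (x2 - xs) <= eps * enorm (gradh xs).
  apply: le_trans (ler_norm _) _; rewrite normrN.
  apply: le_trans (CS _ _) _; rewrite mulrC; apply: ler_wpM2r => //; exact: enorm_ge0.
have i5 : dotv (gradh x1 - gradh xs) (u - x2) <= eps * (Lbar * ru).
  apply: le_trans (dotv_le _ _) _.
  have hl : enorm (gradh x1 - gradh xs) <= Lbar * eps by apply: le_trans (hlip _ _) _; rewrite ler_wpM2l.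
  have := enorm_ge0 (u - x2); have := enorm_ge0 (gradh x1 - gradh xs).
  have : 0 <= Lbar * eps by rewrite mulr_ge0.
  nra.
rewrite eK eH.
have -> : eps * (cK * ru + cK * enorm ys + Lbar * ru + enorm (gradh xs) + tm^-1 * ru)
  = eps * (tm^-1 * ru) + eps * (cK * enorm ys) + eps * (cK * ru) + eps * enorm (gradh xs)
    + eps * (Lbar * ru) by ring.
lra.
Qed.


Lemma err_dual (v ys y1 y0 : 'rV[R]_m) (xs x1 : 'rV[R]_n) (t tm cK eps : R) :
  0 < tm -> tm <= t -> 0 <= eps -> eps <= 1 -> 0 <= cK ->
  (forall u, enorm (u *m K) <= cK * enorm u) ->
  enorm (x1 - xs) <= eps -> enorm (y1 - ys) <= eps -> enorm (y0 - y1) <= eps ->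
  - dotv (x1 *m K) (v - y1) - t^-1 * dotv (y0 - y1) (v - y1)
   <= - dotv (xs *m K) (v - ys)
      + eps * (cK * (enorm (v - ys) + 1) + cK * enorm xs + tm^-1 * (enorm (v - ys) + 1)).
Proof.
move=> tm0 tmt e0 e1 cK0 HK ha hb hc.
set rv := enorm (v - ys) + 1.
have hr : enorm (v - y1) <= rv.
  have -> : v - y1 = (v - ys) + (ys - y1) by rewrite addrA subrK.
  apply: le_trans (enormD _ _) _; rewrite (enormB ys); rewrite /rv; lra.
have t0 : 0 < t by apply: lt_le_trans tmt.
have i1 : - (t^-1 * dotv (y0 - y1) (v - y1)) <= eps * (tm^-1 * rv).
  have a1 : `|dotv (y0 - y1) (v - y1)| <= eps * rv.
    apply: le_trans (CS _ _) _; apply: ler_pM => //; exact: enorm_ge0.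
  have a2 : t^-1 <= tm^-1 by rewrite lef_pV2 ?posrE.
  have a3 : t^-1 * `|dotv (y0 - y1) (v - y1)| <= tm^-1 * (eps * rv).
    by apply: ler_pM => //; rewrite ?invr_ge0 ?ltW.
  have a4 : - (t^-1 * dotv (y0 - y1) (v - y1)) <= t^-1 * `|dotv (y0 - y1) (v - y1)|.
    rewrite -mulrN; apply: ler_wpM2l; first by rewrite invr_ge0 ltW.
    by rewrite -normrN ler_norm.
  have -> : eps * (tm^-1 * rv) = tm^-1 * (eps * rv) by ring.
  exact: le_trans a4 a3.
have eK : dotv (x1 *m K) (v - y1) = dotv (xs *m K) (v - ys) - dotv (xs *m K) (y1 - ys)
    + dotv ((x1 - xs) *m K) (v - y1).
  have -> : v - y1 = (v - ys) - (y1 - ys) by apply/rowP => j; rewrite !mxE; ring.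
  rewrite mulmxBl !dotvBl !dotvBr; ring.
have i2 : dotv (xs *m K) (y1 - ys) <= eps * (cK * enorm xs).
  apply: le_trans (dotv_le _ _) _.
  have hk := HK xs.
  have := enorm_ge0 (y1 - ys); have := enorm_ge0 (xs *m K); have := enorm_ge0 xs.
  nra.
have i3 : - dotv ((x1 - xs) *m K) (v - y1) <= eps * (cK * rv).
  apply: le_trans (ler_norm _) _; rewrite normrN.
  apply: le_trans (CS _ _) _.
  have hk : enorm ((x1 - xs) *m K) <= cK * eps by apply: le_trans (HK _) _; rewrite ler_wpM2l.
  have := enorm_ge0 (v - y1); have := enorm_ge0 ((x1 - xs) *m K).
  have : 0 <= cK * eps by rewrite mulr_ge0.
  nra.
rewrite eK.
have -> : eps * (cK * rv + cK * enorm xs + tm^-1 * rv)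
  = eps * (tm^-1 * rv) + eps * (cK * enorm xs) + eps * (cK * rv) by ring.
lra.
Qed.


Lemma gap_eta (T : R) (X : \bar R) : (T%:E < X)%E -> exists eta, 0 < eta /\ ((T + eta)%:E < X)%E.
Proof.
case: X => [r| |] // hT.
  rewrite lte_fin in hT; exists ((r - T) / 2); split; first by rewrite divr_gt0 // subr_gt0.
  by rewrite lte_fin; lra.
by exists 1; split; [exact: ltr01 | exact: ltry].
Qed.

Lemma limit_saddle xs ys Gh0 yh0 :
  fconj g yh0 = Gh0%:E ->
  (forall e, 0 < e -> forall M, exists k, [/\ (M <= k)%N, enorm (x k.+1 - xs) < e & enorm (y k.+1 - ys) < e]) ->
  tends0 (fun k => enorm (x k.+1 - z k.+2)) -> tends0 (fun k => enorm (x k.+2 - x k.+1)) ->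
  tends0 (fun k => enorm (y k.+1 - y k)) ->
  saddle_point f h K g xs ys.
Proof.
move=> eG0 freq tV tD tDy.
have [cK cK0 HK] := Kbound K.
have [tm tm0 TF] := tau_facts.
have LL := L0; have bb := b0.
have prim_claim : forall u Fu, f u = Fu%:E ->
    (f xs <= (Fu + dotv ((u - xs) *m K) ys + dotv (gradh xs) (u - xs))%:E)%E.
  move=> u Fu eu.
  set T := Fu + dotv ((u - xs) *m K) ys + dotv (gradh xs) (u - xs).
  rewrite leNgt; apply/negP => hT.
  have [eta [eta0 heta]] := gap_eta hT.
  have [V hV HV] := flsc heta.
  have [dd dd0 Hdd] := nbhs_enorm_inv hV.
  set Cst := cK * (enorm (u - xs) + 1) + cK * enorm ys + Lbar * (enorm (u - xs) + 1)
               + enorm (gradh xs) + tm^-1 * (enorm (u - xs) + 1).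
  have Cst0 : 0 <= Cst.
    have r0 : 0 <= enorm (u - xs) + 1 by have := enorm_ge0 (u - xs); lra.
    have := mulr_ge0 (ltW cK0) r0; have := mulr_ge0 (ltW cK0) (enorm_ge0 ys).
    have := mulr_ge0 LL r0; have := enorm_ge0 (gradh xs).
    have tmi : 0 < tm^-1 by rewrite invr_gt0.
    have := mulr_ge0 (ltW tmi) r0.
    rewrite /Cst; lra.
  set eps := Num.min 1 (Num.min (dd / 2) (eta / (Cst + 1))).
  have eps0 : 0 < eps by rewrite /eps !lt_min ltr01 !divr_gt0 //; lra.
  have eps1 : eps <= 1 by rewrite /eps ge_min lexx.
  have eps2 : eps <= dd / 2 by rewrite /eps !ge_min lexx orbT.
  have eps3 : eps <= eta / (Cst + 1) by rewrite /eps !ge_min lexx !orbT.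
  have epsC : eps * Cst < eta.
    have : eps * (Cst + 1) <= eta by rewrite -ler_pdivlMr //; lra.
    nra.
  have half0 : 0 < eps / 2 by rewrite divr_gt0.
  have [M1 H1] := tV _ half0.
  have [M2 H2] := tD _ half0.
  have [k [hk hx hy]] := freq _ half0 (maxn M1 M2).
  have h1 := H1 k (leq_trans (leq_maxl _ _) hk).
  have h2 := H2 k (leq_trans (leq_maxr _ _) hk).
  have ha : enorm (x k.+2 - xs) <= eps.
    have -> : x k.+2 - xs = (x k.+2 - x k.+1) + (x k.+1 - xs) by rewrite addrA subrK.
    apply: le_trans (enormD _ _) _; lra.
  have hd : enorm (z k.+2 - x k.+2) <= eps.
    have -> : z k.+2 - x k.+2 = - (x k.+1 - z k.+2) + - (x k.+2 - x k.+1).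
      by apply/rowP => j; rewrite !mxE; ring.
    apply: le_trans (enormD _ _) _; rewrite !enormN; lra.
  have [tl _ _ _] := TF k.+1.
  have hb : enorm (y k.+1 - ys) <= eps by lra.
  have hc : enorm (x k.+1 - xs) <= eps by lra.
  have err := err_primal u tm0 tl (ltW eps0) eps1 (ltW cK0) HK ha hb hc hd.
  have [eF2 P1] := prim k.+1.
  have hp := P1 u Fu eu.
  have inV : V (x k.+2) by apply: Hdd; lra.
  have := HV _ inV; rewrite eF2 lte_fin => hF.
  rewrite -/Cst in err.
  have : T + eps * Cst < T + eta by lra.
  rewrite /T in hF *; lra.
have [Fs eFs] : exists Fs, f xs = Fs%:E.
  have [[u0 hu0] _] := fprop.
  have [Fu0 eu0] := finE (fprop.2 u0) hu0.
  apply: finE; first exact: fprop.2.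
  exact: le_lt_trans (prim_claim u0 Fu0 eu0) (ltry _).
have dual_claim : forall v Gv, fconj g v = Gv%:E ->
    (fconj g ys <= (Gv - dotv (xs *m K) (v - ys))%:E)%E.
  move=> v Gv ev.
  set T := Gv - dotv (xs *m K) (v - ys).
  rewrite leNgt; apply/negP => hT.
  have [eta [eta0 heta]] := gap_eta hT.
  move: heta; rewrite /fconj => /ereal_sup_gtP [_ [w0 _ <-] hw0].
  case Eg: (g w0) (gprop.2 w0) hw0 => [r| |] // _.
  rewrite -EFinD lte_fin => hw0.
  set Cst := cK * (enorm (v - ys) + 1) + cK * enorm xs + (beta * tm)^-1 * (enorm (v - ys) + 1).
  have btm : 0 < beta * tm by rewrite mulr_gt0.
  have Cst0 : 0 <= Cst.
    have r0 : 0 <= enorm (v - ys) + 1 by have := enorm_ge0 (v - ys); lra.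
    have tmi : 0 < (beta * tm)^-1 by rewrite invr_gt0.
    have := mulr_ge0 (ltW cK0) r0; have := mulr_ge0 (ltW cK0) (enorm_ge0 xs).
    have := mulr_ge0 (ltW tmi) r0.
    rewrite /Cst; lra.
  have w00 := enorm_ge0 w0.
  set eps := Num.min 1 (Num.min (eta / (2 * (Cst + 1))) (eta / (2 * (enorm w0 + 1)))).
  have eps0 : 0 < eps by rewrite /eps !lt_min ltr01 !divr_gt0 //; rewrite mulr_gt0 //; lra.
  have eps1 : eps <= 1 by rewrite /eps ge_min lexx.
  have eps2 : eps <= eta / (2 * (Cst + 1)) by rewrite /eps !ge_min lexx orbT.
  have eps3 : eps <= eta / (2 * (enorm w0 + 1)) by rewrite /eps !ge_min lexx !orbT.
  have epsC : eps * Cst < eta / 2.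
    have : eps * (2 * (Cst + 1)) <= eta by rewrite -ler_pdivlMr //; rewrite mulr_gt0 //; lra.
    nra.
  have epsW : eps * enorm w0 < eta / 2.
    have : eps * (2 * (enorm w0 + 1)) <= eta by rewrite -ler_pdivlMr //; rewrite mulr_gt0 //; lra.
    nra.
  have [M3 H3] := tDy _ eps0.
  have [k [hk hx hy]] := freq _ eps0 M3.
  have h3 := H3 k hk.
  have [_ _ _ _] := TF k.+1.
  have [tl _ _ _] := TF k.+1.
  have tl' : beta * tm <= beta * tau k.+1 by rewrite ler_wpM2l // ltW.
  have hc : enorm (y k - y k.+1) <= eps by rewrite enormB; lra.
  have err := err_dual v btm tl' (ltW eps0) eps1 (ltW cK0) HK (ltW hx) (ltW hy) hc.
  rewrite -/Cst in err.
  have [eG1 D0] := dual k.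
  have hd := D0 v Gv ev.
  have lb := fconj_lb (y k.+1) Eg; rewrite eG1 lee_fin in lb.
  have hw : dotv w0 ys - enorm w0 * eps <= dotv w0 (y k.+1).
    have -> : dotv w0 (y k.+1) = dotv w0 ys + dotv w0 (y k.+1 - ys) by rewrite dotvBr; ring.
    have := CS w0 (y k.+1 - ys); rewrite ler_norml => /andP[hh _].
    have : enorm w0 * enorm (y k.+1 - ys) <= enorm w0 * eps by rewrite ler_wpM2l // ltW.
    lra.
  clear D0 H3 hT Eg eG1 ev eG0.
  have s1 : Gy k.+1 < Gv - dotv (xs *m K) (v - ys) + eta / 2 by lra.
  have s2 : dotv w0 ys - r - eta / 2 < Gy k.+1 by lra.
  have s3 : dotv w0 ys - r < Gv - dotv (xs *m K) (v - ys) + eta by lra.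
  move: hw0; rewrite ltNge => /negP; apply; exact: ltW.
have [Gs eGs] : exists Gs, fconj g ys = Gs%:E.
  apply: finE; first exact: fconj_ninfty.
  exact: le_lt_trans (dual_claim yh0 Gh0 eG0) (ltry _).
apply: (real_saddle eFs eGs).
  move=> u Fu eu; have := prim_claim u Fu eu; rewrite eFs lee_fin => hh.
  have := grad_ineq hcvx hgrad xs u.
  rewrite mulmxBl dotvBl in hh; lra.
move=> v Gv ev; have := dual_claim v Gv ev; rewrite eGs lee_fin dotvBr; lra.
Qed.


Lemma main_conv : (exists xs ys, saddle_point f h K g xs ys) ->
  exists xh yh, saddle_point f h K g xh yh /\ x @ \oo --> xh /\ y @ \oo --> yh.
Proof.
case=> x0 [y0 hs].
have [Fh [Gh [eF eG S1 S2]]] := saddle_real hs.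
have [tV tD tDy _] := decay eF eG S1 S2.
have [N [B HB]] := bounded_iter eF eG S1 S2.
have [xs [ys freq]] := cluster_rV (X := fun k => x k.+1) (Y := fun k => y k.+1) HB.
have tVn : tends0 (fun k => enorm (x k.+1 - z k.+2)).
  apply: tends0_sqrt => [k|]; first exact: enorm_ge0.
  by apply: tends0_le tV => k; rewrite enorm_sq.
have tDn : tends0 (fun k => enorm (x k.+2 - x k.+1)).
  by apply: tends0_sqrt => [k|] //; exact: enorm_ge0.
have tDyn : tends0 (fun k => enorm (y k.+1 - y k)).
  by apply: tends0_sqrt => [k|] //; exact: enorm_ge0.
have sad := limit_saddle eG freq tVn tDn tDyn.
exists xs, ys; split => //.
have [Fs [Gs [eFs eGs S1s S2s]]] := saddle_real sad.
have [_ _ _ [N' dec']] := decay eFs eGs S1s S2s.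
set q := psi / (psi - 1) / 2.
have q0 : 0 < q := q_pos.
have bb := b0; have mm := mu'_pos.
have tE : tends0 (Ey xs ys).
  move=> e e0.
  set Cq := q + beta^-1 / 2 + mu' / 2.
  have Cq0 : 0 < Cq.
    have bi : 0 < beta^-1 by rewrite invr_gt0.
    rewrite /Cq; lra.
  set eps := Num.min 1 (e / (Cq + 1)).
  have eps0 : 0 < eps by rewrite /eps lt_min ltr01 divr_gt0 //; lra.
  have eps1 : eps <= 1 by rewrite /eps ge_min lexx.
  have eps2 : eps <= e / (Cq + 1) by rewrite /eps ge_min lexx orbT.
  have e3 : 0 < eps / 3 by rewrite divr_gt0.
  have [M1 H1] := tVn _ e3.
  have [M2 H2] := tDn _ e3.
  have [k [hk hx hy]] := freq _ e3 (maxn (maxn M1 M2) N').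
  have hk1 : (M1 <= k.+1)%N by apply: leq_trans (leq_trans (leq_maxl _ _) (leq_maxl _ _)) (leq_trans hk (leqnSn _)).
  have hk2 : (M2 <= k)%N by apply: leq_trans (leq_trans (leq_maxr _ _) (leq_maxl _ _)) hk.
  have hk3 : (N' <= k.+1)%N by apply: leq_trans (leq_maxr _ _) (leq_trans hk (leqnSn _)).
  have a1 := H1 k.+1 hk1; have a2 := H2 k hk2.
  have hz : enorm (z k.+3 - xs) < eps.
    have -> : z k.+3 - xs = - (x k.+2 - z k.+3) + ((x k.+2 - x k.+1) + (x k.+1 - xs)).
      by apply/rowP => j; rewrite !mxE; ring.
    apply: le_lt_trans (enormD _ _) _; rewrite enormN.
    apply: le_lt_trans (lerD (lexx _) (enormD _ _)) _; lra.
  have sq (a : R) : 0 <= a -> a < eps -> a ^+ 2 <= eps by move=> a0 ha; nra.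
  have b1 := sq _ (enorm_ge0 _) hz; rewrite enorm_sq in b1.
  have hy' : enorm (y k.+1 - ys) < eps by lra.
  have b2 := sq _ (enorm_ge0 _) hy'; rewrite enorm_sq in b2.
  have b3 : enorm (x k.+2 - x k.+1) ^+ 2 <= eps by apply: sq; [exact: enorm_ge0 | lra].
  have hE : Ey xs ys k.+1 < e.
    rewrite /Ey -/q.
    have c1 : q * dotv (z k.+3 - xs) (z k.+3 - xs) <= q * eps by apply: ler_wpM2l; [exact: ltW | exact: b1].
    have c2 : dotv (y k.+1 - ys) (y k.+1 - ys) / beta / 2 <= eps * (beta^-1 / 2).
      have -> : dotv (y k.+1 - ys) (y k.+1 - ys) / beta / 2
        = dotv (y k.+1 - ys) (y k.+1 - ys) * (beta^-1 / 2) by ring.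
      by apply: ler_wpM2r => //; rewrite divr_ge0 // invr_ge0 ltW.
    have c3 : mu' / 2 * enorm (x k.+2 - x k.+1) ^+ 2 <= mu' / 2 * eps.
      by apply: ler_wpM2l => //; rewrite divr_ge0 // ltW.
    have c4 : eps * (Cq + 1) <= e by rewrite -ler_pdivlMr //; lra.
    have : eps * Cq < e by nra.
    rewrite /Cq; lra.
  exists k.+1 => k' hk'.
  exact: le_lt_trans (noninc_le dec' hk3 hk') hE.
have tZ : tends0 (fun k => enorm (z k.+2 - xs)).
  apply: tends0_sqrt => [k|]; first exact: enorm_ge0.
  apply: (tends0_le_mul (c := q^-1)) tE; first by rewrite invr_gt0.
  move=> k; rewrite enorm_sq ler_pdivlMl // /Ey -/q.
  have := dotvv_ge0 (y k - ys); have := sqr_ge0 (enorm (x k.+1 - x k)).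
  move=> h1 h2.
  have : 0 <= dotv (y k - ys) (y k - ys) / beta / 2 by rewrite !divr_ge0 // ltW.
  have : 0 <= mu' / 2 * enorm (x k.+1 - x k) ^+ 2 by apply: mulr_ge0; [apply: divr_ge0 => //; exact: ltW | exact: sqr_ge0].
  lra.
have tX : tends0 (fun k => enorm (x k.+1 - xs)).
  apply: tends0_le (tends0_add tVn tZ) => k /=.
  have -> : x k.+1 - xs = (x k.+1 - z k.+2) + (z k.+2 - xs) by rewrite addrA subrK.
  exact: enormD.
have tY : tends0 (fun k => enorm (y k - ys)).
  apply: tends0_sqrt => [k|]; first exact: enorm_ge0.
  apply: (tends0_le_mul (c := 2 * beta)) tE; first by rewrite mulr_gt0.
  move=> k; rewrite enorm_sq /Ey -/q.
  have : 0 <= q * dotv (z k.+2 - xs) (z k.+2 - xs) by apply: mulr_ge0; [exact: ltW | exact: dotvv_ge0].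
  have : 0 <= mu' / 2 * enorm (x k.+1 - x k) ^+ 2 by apply: mulr_ge0; [apply: divr_ge0 => //; exact: ltW | exact: sqr_ge0].
  have e : 2 * beta * (dotv (y k - ys) (y k - ys) / beta / 2) = dotv (y k - ys) (y k - ys).
    by field; rewrite gt_eqF.
  have : 0 <= 2 * beta by apply: mulr_ge0 => //; exact: ltW.
  nra.
split.
- apply/cvgrPdist_lt => e e0.
  have [M HM] := tX e e0.
  exists M.+1 => // t /= ht.
  have -> : t = t.-1.+1 by rewrite prednK // (leq_trans _ ht).
  apply: le_lt_trans (mxnorm_le_enorm _) _; rewrite enormB; apply: HM.
  by rewrite -ltnS prednK // (leq_trans _ ht).
- apply/cvgrPdist_lt => e e0.
  have [M HM] := tY e e0.
  exists M => // t /= ht.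
  apply: le_lt_trans (mxnorm_le_enorm _) _; rewrite enormB; exact: HM.
Qed.

End Main.

Theorem theorem3p1 (R : realType) (n m : nat)
  (f : 'rV[R]_n -> \bar R) (g : 'rV[R]_m -> \bar R)
  (K : 'M[R]_(n, m)) (h : 'rV[R]_n -> R) (gradh : 'rV[R]_n -> 'rV[R]_n)
  (Lbar : R)
  (beta psi mu mu' tau0 : R)
  (z x : nat -> 'rV[R]_n) (w y : nat -> 'rV[R]_m) (tau : nat -> R) :
  (* f, g proper convex lsc *)
  proper_fun f -> convex_efun f -> lower_semicontinuous f ->
  proper_fun g -> convex_efun g -> lower_semicontinuous g ->
  (* h convex, differentiable with Lbar-Lipschitz gradient *)
  convex_rfun h -> is_gradient h gradh -> 0 <= Lbar -> lipschitz_with Lbar gradh ->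
  (* (A1) *)
  (exists xs ys, saddle_point f h K g xs ys) ->
  rel_interior (Kdomf_minus_domg f K g) 0 ->
  (* parameters *)
  0 < beta -> 1 < psi -> psi <= golden -> 0 < 2 * mu' -> 2 * mu' < mu -> mu < psi / 2 ->
  0 < tau0 ->
  (* P-GRPDA iterations *)
  z 0%N = x 0%N -> tau 0%N = tau0 ->
  (forall k : nat,
     z k.+1 = ((psi - 1) / psi) *: x k + psi^-1 *: z k) ->
  (forall k : nat,
     is_prox (tau k) f
       (z k.+1 - tau k *: (y k *m K^T) - tau k *: gradh (x k)) (x k.+1)) ->
  (forall k : nat,
     tau k.+1 =
       min_ratio
         (min_ratio (tau k) (mu * enorm (x k.+1 - x k))
                    (Num.sqrt beta * enorm (x k.+1 *m K - x k *m K)))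
         (mu' * enorm (x k.+1 - x k))
         (enorm (gradh (x k.+1) - gradh (x k)))) ->
  (forall k : nat,
     is_prox (beta * tau k.+1)^-1 g
       ((beta * tau k.+1)^-1 *: y k + x k.+1 *m K) (w k.+1)) ->
  (forall k : nat,
     y k.+1 = y k + (beta * tau k.+1) *: (x k.+1 *m K - w k.+1)) ->
  exists (xh : 'rV[R]_n) (yh : 'rV[R]_m),
    saddle_point f h K g xh yh /\ x @ \oo --> xh /\ y @ \oo --> yh.
Proof.
move=> fprop fcvx flsc gprop gcvx glsc hcvx hgrad L0 hlip Hsad _ b0 psi1 psig mu'0 mumu' mupsi
  tau00 ez0 etau0 ez ex etau ew ey.
exact: (main_conv fprop fcvx flsc gprop gcvx hcvx hgrad L0 hlip b0 psi1 psig mu'0 mumu' mupsi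
  tau00 etau0 ez ex etau ew ey Hsad).
Qed.
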